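(* Let $X$ be a complex Banach space with open unit ball $B$, let $S:X\to X$ be a bounded linear operator of finite rank such that $P=I-S$ satisfies $\|P\|=1$. Then for every $\phi\in M_0(B)$ (the fiber over $0$ of the spectrum of $A_u(B)$) and every $f\in A_u(B)$ we have $\hat f(\phi)=\widehat{f\circ P}(\phi)$. (Note $f\circ P\in A_u(B)$ since $P(B)\subset B$.)
   Context: $X$ is a complex Banach space, $B$ its open unit ball, $\bar B^{**}$ the closed unit ball of $X^{**}$. $A_u(B)$ denotes the uniform algebra (with the supremum norm on $B$) of all bounded holomorphic functions $f:B\to\mathbb C$ that are uniformly continuous on $B$. For a uniform algebra $H$ of functions on $B$ containing the restrictions of elements of $X^*$, $M_H$ is its spectrum (nonzero multiplicative linear functionals), $\hat f(\tau)=\tau(f)$ is the Gelfand transform, and for $x^{**}\in\bar B^{**}$ the fiber over $x^{**}$ is $M_{x^{**}}(B)=\{\tau\in M_H:\ \tau(x^* )=x^{**}(x^* )\ \text{for all } x^*\in X^*\}$. Here $H=A_u(B)$. *)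

(* Defs.v *)
From Stdlib Require Import Reals.
Open Scope R_scope.

Definition Cplx : Type := (R * R)%type.
Definition C0 : Cplx := (0, 0).
Definition C1 : Cplx := (1, 0).
Definition Cadd (a b : Cplx) : Cplx := (fst a + fst b, snd a + snd b).
Definition Copp (a : Cplx) : Cplx := (- fst a, - snd a).
Definition Csub (a b : Cplx) : Cplx := Cadd a (Copp b).
Definition Cmul (a b : Cplx) : Cplx :=
  (fst a * fst b - snd a * snd b, fst a * snd b + snd a * fst b).
Definition Cmod (a : Cplx) : R := sqrt (fst a * fst a + snd a * snd a).

Record CBanach := {
  car :> Type;
  vzero : car;
  vadd : car -> car -> car;
  vopp : car -> car;
  vscal : Cplx -> car -> car;
  vnorm : car -> R;
  vadd_assoc : forall x y z, vadd x (vadd y z) = vadd (vadd x y) z;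
  vadd_comm : forall x y, vadd x y = vadd y x;
  vadd_0 : forall x, vadd x vzero = x;
  vadd_opp : forall x, vadd x (vopp x) = vzero;
  vscal_assoc : forall a b x, vscal a (vscal b x) = vscal (Cmul a b) x;
  vscal_1 : forall x, vscal C1 x = x;
  vscal_distr_v : forall a x y, vscal a (vadd x y) = vadd (vscal a x) (vscal a y);
  vscal_distr_c : forall a b x, vscal (Cadd a b) x = vadd (vscal a x) (vscal b x);
  vnorm_nonneg : forall x, 0 <= vnorm x;
  vnorm_eq0 : forall x, vnorm x = 0 -> x = vzero;
  vnorm_scal : forall a x, vnorm (vscal a x) = Cmod a * vnorm x;
  vnorm_triangle : forall x y, vnorm (vadd x y) <= vnorm x + vnorm y;
  vcomplete : forall u : nat -> car,
    (forall eps, 0 < eps -> exists N, forall m n, (N <= m)%nat -> (N <= n)%nat ->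
        vnorm (vadd (u m) (vopp (u n))) < eps) ->
    exists l, forall eps, 0 < eps -> exists N, forall n, (N <= n)%nat ->
        vnorm (vadd (u n) (vopp l)) < eps
}.

Arguments vzero {_}. Arguments vadd {_}. Arguments vopp {_}.
Arguments vscal {_}. Arguments vnorm {_}.

Definition vsub {X : CBanach} (x y : X) : X := vadd x (vopp y).

Definition inB {X : CBanach} (x : X) : Prop := vnorm x < 1.

Definition Clinear_fun {X : CBanach} (L : X -> Cplx) : Prop :=
  (forall x y, L (vadd x y) = Cadd (L x) (L y)) /\
  (forall a x, L (vscal a x) = Cmul a (L x)).

Definition in_dual {X : CBanach} (L : X -> Cplx) : Prop :=
  Clinear_fun L /\ exists M, forall x, Cmod (L x) <= M * vnorm x.

Definition bounded_op {X : CBanach} (T : X -> X) : Prop :=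
  (forall x y, T (vadd x y) = vadd (T x) (T y)) /\
  (forall a x, T (vscal a x) = vscal a (T x)) /\
  (exists M, forall x, vnorm (T x) <= M * vnorm x).

Fixpoint lincomb {X : CBanach} (n : nat) (c : nat -> Cplx) (v : nat -> X) : X :=
  match n with
  | O => vzero
  | S k => vadd (lincomb k c v) (vscal (c k) (v k))
  end.

Definition finite_rank {X : CBanach} (T : X -> X) : Prop :=
  exists (n : nat) (v : nat -> X), forall x, exists c : nat -> Cplx, T x = lincomb n c v.

Definition op_norm_is {X : CBanach} (T : X -> X) (r : R) : Prop :=
  is_lub (fun t => exists x : X, vnorm x <= 1 /\ t = vnorm (T x)) r.

Definition holomorphic_on_B {X : CBanach} (f : X -> Cplx) : Prop :=
  forall x, inB x -> exists L : X -> Cplx, in_dual L /\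
    forall eps, 0 < eps -> exists delta, 0 < delta /\
      forall h, vnorm h < delta ->
        Cmod (Csub (Csub (f (vadd x h)) (f x)) (L h)) <= eps * vnorm h.

Definition bounded_on_B {X : CBanach} (f : X -> Cplx) : Prop :=
  exists M, forall x, inB x -> Cmod (f x) <= M.

Definition unif_cont_on_B {X : CBanach} (f : X -> Cplx) : Prop :=
  forall eps, 0 < eps -> exists delta, 0 < delta /\
    forall x y, inB x -> inB y -> vnorm (vsub x y) < delta ->
      Cmod (Csub (f x) (f y)) < eps.

(** f : X -> Cplx represents an element of A_u(B) (only its values on B matter) *)
Definition in_Au {X : CBanach} (f : X -> Cplx) : Prop :=
  bounded_on_B f /\ holomorphic_on_B f /\ unif_cont_on_B f.

(** * Spectrum M_{A_u(B)}: nonzero multiplicative linear functionals on A_u(B).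
    A functional is given on representatives X -> Cplx and must respect
    equality on B. *)
Definition character {X : CBanach} (tau : (X -> Cplx) -> Cplx) : Prop :=
  (forall f g, in_Au f -> in_Au g -> (forall x, inB x -> f x = g x) -> tau f = tau g) /\
  (forall f g, in_Au f -> in_Au g -> tau (fun x => Cadd (f x) (g x)) = Cadd (tau f) (tau g)) /\
  (forall a f, in_Au f -> tau (fun x => Cmul a (f x)) = Cmul a (tau f)) /\
  (forall f g, in_Au f -> in_Au g -> tau (fun x => Cmul (f x) (g x)) = Cmul (tau f) (tau g)) /\
  (exists f, in_Au f /\ tau f <> C0).

Definition in_fiber0 {X : CBanach} (tau : (X -> Cplx) -> Cplx) : Prop :=
  character tau /\ forall xs : X -> Cplx, in_dual xs -> tau xs = C0.

(* Main.v *)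
From Pilot Require Import Defs.
From Stdlib Require Import Reals Lra Lia Psatz Classical ClassicalEpsilon FunctionalExtensionality ZArith.
Require Coquelicot.Complex.
Import Pilot.Defs.
Open Scope R_scope.

(** * Part A: complex arithmetic *)
Ltac cdestr := repeat match goal with
  | a : Cplx |- _ => destruct a
  | a : (R * R)%type |- _ => destruct a
  end.
Ltac Ceq := intros; cdestr; unfold Csub, Cadd, Cmul, Copp, C0, C1 in *; apply injective_projections; simpl; ring.

Lemma Cadd_comm a b : Cadd a b = Cadd b a. Proof. Ceq. Qed.
Lemma Cadd_assoc a b c : Cadd a (Cadd b c) = Cadd (Cadd a b) c. Proof. Ceq. Qed.
Lemma Cadd_0_r a : Cadd a C0 = a. Proof. Ceq. Qed.
Lemma Cadd_0_l a : Cadd C0 a = a. Proof. Ceq. Qed.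
Lemma Cmul_comm a b : Cmul a b = Cmul b a. Proof. Ceq. Qed.
Lemma Cmul_assoc a b c : Cmul a (Cmul b c) = Cmul (Cmul a b) c. Proof. Ceq. Qed.
Lemma Cmul_1_l a : Cmul C1 a = a. Proof. Ceq. Qed.
Lemma Cmul_1_r a : Cmul a C1 = a. Proof. Ceq. Qed.
Lemma Cmul_0_l a : Cmul C0 a = C0. Proof. Ceq. Qed.
Lemma Cmul_0_r a : Cmul a C0 = C0. Proof. Ceq. Qed.
Lemma Cmul_add_r a b c : Cmul a (Cadd b c) = Cadd (Cmul a b) (Cmul a c). Proof. Ceq. Qed.
Lemma Cmul_add_l a b c : Cmul (Cadd a b) c = Cadd (Cmul a c) (Cmul b c). Proof. Ceq. Qed.
Lemma Csub_diag a : Csub a a = C0. Proof. Ceq. Qed.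

Lemma Cmod_eq a : Cmod a = Complex.Cmod a.
Proof. unfold Cmod, Complex.Cmod. f_equal. simpl. ring. Qed.
Lemma Cmod_nonneg a : 0 <= Cmod a.
Proof. unfold Cmod. apply sqrt_pos. Qed.
Lemma Cmod_mul a b : Cmod (Cmul a b) = Cmod a * Cmod b.
Proof. rewrite !Cmod_eq. apply Complex.Cmod_mult. Qed.
Lemma Cmod_tri a b : Cmod (Cadd a b) <= Cmod a + Cmod b.
Proof. rewrite !Cmod_eq. apply Complex.Cmod_triangle. Qed.
Lemma Cmod_opp a : Cmod (Copp a) = Cmod a.
Proof. unfold Cmod, Copp. simpl. f_equal. ring. Qed.
Lemma Cmod_C0 : Cmod C0 = 0.
Proof. unfold Cmod, C0; simpl. replace (0*0+0*0) with 0 by ring. apply sqrt_0. Qed.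
Lemma Cmod_C1 : Cmod C1 = 1.
Proof. unfold Cmod, C1; simpl. replace (1*1+0*0) with 1 by ring. apply sqrt_1. Qed.
Lemma Cmod_real r : Cmod (r, 0) = Rabs r.
Proof. unfold Cmod; simpl. replace (r*r+0*0) with (r*r) by ring. apply sqrt_Rsqr_abs. Qed.
Lemma Cmod_fst a : Rabs (fst a) <= Cmod a.
Proof. unfold Cmod. rewrite <- sqrt_Rsqr_abs. apply sqrt_le_1_alt. unfold Rsqr.
  pose proof (Rle_0_sqr (snd a)). unfold Rsqr in H. lra. Qed.
Lemma Cmod_snd a : Rabs (snd a) <= Cmod a.
Proof. unfold Cmod. rewrite <- sqrt_Rsqr_abs. apply sqrt_le_1_alt. unfold Rsqr.
  pose proof (Rle_0_sqr (fst a)). unfold Rsqr in H. lra. Qed.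
Lemma Cmod_le_sum a : Cmod a <= Rabs (fst a) + Rabs (snd a).
Proof. destruct a as [x y]. simpl.
  assert (E: (x,y) = Cadd (x,0) (0,y)) by (unfold Cadd; simpl; f_equal; ring).
  rewrite E. eapply Rle_trans. apply Cmod_tri. rewrite Cmod_real.
  replace (Cmod (0,y)) with (Rabs y). lra.
  unfold Cmod; simpl. rewrite <- sqrt_Rsqr_abs. f_equal. unfold Rsqr; ring. Qed.
Lemma Cmod_eq0 a : Cmod a = 0 -> a = C0.
Proof. intro H. pose proof (Cmod_fst a). pose proof (Cmod_snd a). destruct a as [x y].
  simpl in *. rewrite H in *. unfold C0. f_equal.
  - destruct (Req_dec x 0); auto. pose proof (Rabs_pos_lt x H2). lra.
  - destruct (Req_dec y 0); auto. pose proof (Rabs_pos_lt y H2). lra. Qed.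
Lemma Cmod_sub_sym a b : Cmod (Csub a b) = Cmod (Csub b a).
Proof. replace (Csub a b) with (Copp (Csub b a)) by Ceq. apply Cmod_opp. Qed.
Lemma Cmod_sub_tri a b c : Cmod (Csub a c) <= Cmod (Csub a b) + Cmod (Csub b c).
Proof. replace (Csub a c) with (Cadd (Csub a b) (Csub b c)) by Ceq. apply Cmod_tri. Qed.
Lemma Cmod_sub_le a b : Cmod (Csub a b) <= Cmod a + Cmod b.
Proof. unfold Csub. eapply Rle_trans. apply Cmod_tri. rewrite Cmod_opp; lra. Qed.
Lemma Cmod_rev a b : Cmod a - Cmod b <= Cmod (Csub a b).
Proof. replace a with (Cadd (Csub a b) b) at 1 by Ceq.
  pose proof (Cmod_tri (Csub a b) b). lra. Qed.
Lemma Cmod_pos a : a <> C0 -> 0 < Cmod a.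
Proof. intro H. destruct (Cmod_nonneg a) as [h|h]; auto. exfalso. apply H, Cmod_eq0; auto. Qed.

Definition Cinv (a : Cplx) : Cplx :=
  (fst a / (fst a * fst a + snd a * snd a), - snd a / (fst a * fst a + snd a * snd a)).
Lemma Cnorm2_pos a : a <> C0 -> 0 < fst a * fst a + snd a * snd a.
Proof. intro H. destruct a as [x y]; simpl.
  destruct (Req_dec x 0); destruct (Req_dec y 0); subst.
  - exfalso; apply H; reflexivity.
  - nra. - nra. - nra. Qed.
Lemma Cmul_inv_r a : a <> C0 -> Cmul a (Cinv a) = C1.
Proof. intro H. pose proof (Cnorm2_pos a H). destruct a as [x y]; simpl in *.
  unfold Cmul, Cinv, C1; simpl. f_equal; field; lra. Qed.
Lemma Cmod_inv a : a <> C0 -> Cmod (Cinv a) = / Cmod a.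
Proof. intro H. pose proof (Cmul_inv_r a H).
  assert (Cmod a * Cmod (Cinv a) = 1) by (rewrite <- Cmod_mul, H0; apply Cmod_C1).
  pose proof (Cmod_pos a H). field_simplify_eq; [|lra]. lra. Qed.

Arguments vadd_assoc {_}. Arguments vadd_comm {_}. Arguments vadd_0 {_}. Arguments vadd_opp {_}.
Arguments vscal_assoc {_}. Arguments vscal_1 {_}. Arguments vscal_distr_v {_}. Arguments vscal_distr_c {_}.
Arguments vnorm_nonneg {_}. Arguments vnorm_eq0 {_}. Arguments vnorm_scal {_}. Arguments vnorm_triangle {_}.
Section Ban.
Variable X : CBanach.
Implicit Types x y z : X.

Lemma vadd_0l x : vadd vzero x = x.
Proof. rewrite vadd_comm. apply vadd_0. Qed.
Lemma vadd_cancel_r x y z : vadd x z = vadd y z -> x = y.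
Proof. intro H. rewrite <- (vadd_0 x), <- (vadd_0 y), <- (vadd_opp z), !vadd_assoc, H. reflexivity. Qed.
Lemma vscal_C0 x : vscal C0 x = vzero.
Proof. apply (vadd_cancel_r _ _ (vscal C0 x)). rewrite vadd_0l, <- vscal_distr_c.
  f_equal. unfold C0, Cadd; simpl; f_equal; ring. Qed.
Lemma vscal_zero a : vscal a (@vzero X) = vzero.
Proof. apply (vadd_cancel_r _ _ (vscal a vzero)). rewrite vadd_0l, <- vscal_distr_v, vadd_0. reflexivity. Qed.
Lemma vopp_scal x : vopp x = vscal (-1, 0) x.
Proof. apply (vadd_cancel_r _ _ x). rewrite vadd_comm, vadd_opp.
  rewrite <- (vscal_1 x) at 2. rewrite <- vscal_distr_c. rewrite <- (vscal_C0 x). f_equal.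
  unfold C0, C1, Cadd; simpl; f_equal; ring. Qed.
Lemma vnorm_zero : vnorm (@vzero X) = 0.
Proof. rewrite <- (vscal_C0 vzero), vnorm_scal, Cmod_C0. ring. Qed.
Lemma vnorm_opp x : vnorm (vopp x) = vnorm x.
Proof. rewrite vopp_scal, vnorm_scal, Cmod_real. rewrite Rabs_left by lra. ring. Qed.
Lemma vopp_opp x : vopp (vopp x) = x.
Proof. apply (vadd_cancel_r _ _ (vopp x)). rewrite vadd_opp, vadd_comm, vadd_opp. reflexivity. Qed.
Lemma vopp_add x y : vopp (vadd x y) = vadd (vopp x) (vopp y).
Proof. rewrite !vopp_scal. apply vscal_distr_v. Qed.
Lemma vnorm_sub_sym x y : vnorm (vsub x y) = vnorm (vsub y x).
Proof. unfold vsub. rewrite <- vnorm_opp, vopp_add, vopp_opp, vadd_comm. reflexivity. Qed.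
Lemma vsub_diag x : vsub x x = vzero.
Proof. apply vadd_opp. Qed.
Lemma vsub_tri x y z : vnorm (vsub x z) <= vnorm (vsub x y) + vnorm (vsub y z).
Proof. replace (vsub x z) with (vadd (vsub x y) (vsub y z)). apply vnorm_triangle.
  unfold vsub. rewrite <- vadd_assoc, (vadd_assoc (vopp y)), (vadd_comm (vopp y) y), vadd_opp, vadd_0l. reflexivity. Qed.
Lemma vnorm_sub_le x y : vnorm (vsub x y) <= vnorm x + vnorm y.
Proof. unfold vsub. rewrite <- (vnorm_opp y). apply vnorm_triangle. Qed.
Lemma vnorm_rev x y : vnorm x - vnorm y <= vnorm (vsub x y).
Proof. pose proof (vsub_tri x y vzero). unfold vsub in H at 1 3.
  rewrite <- (vscal_C0 vzero) in H. rewrite vopp_scal, vscal_assoc in H.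
  replace (Cmul (-1, 0) C0) with C0 in H by Ceq. rewrite vscal_C0, !vadd_0 in H. lra. Qed.
Lemma vadd_sub x y : vadd y (vsub x y) = x.
Proof. unfold vsub. rewrite vadd_comm, <- vadd_assoc, (vadd_comm (vopp y)), vadd_opp, vadd_0. reflexivity. Qed.
Lemma vsub_add x y : vsub (vadd x y) x = y.
Proof. unfold vsub. rewrite (vadd_comm x y), <- vadd_assoc, vadd_opp, vadd_0. reflexivity. Qed.
End Ban.

Section Ban2.
Variable X : CBanach.
Implicit Types x y z : X.
Lemma vadd_swap x y z : vadd (vadd x y) z = vadd (vadd x z) y.
Proof. rewrite <- !vadd_assoc, (vadd_comm y z). reflexivity. Qed.
Lemma vsub_add_r x y h : vsub (vadd x h) (vadd y h) = vsub x y.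
Proof. unfold vsub. rewrite vopp_add. rewrite <- vadd_assoc. f_equal.
  rewrite vadd_comm, <- vadd_assoc, (vadd_comm (vopp h)), vadd_opp, vadd_0. reflexivity. Qed.
Lemma vsub_add_l x y h : vsub (vadd h x) (vadd h y) = vsub x y.
Proof. rewrite (vadd_comm h x), (vadd_comm h y). apply vsub_add_r. Qed.
Lemma vnorm_real_scal (r : R) x : vnorm (vscal (r,0) x) = Rabs r * vnorm x.
Proof. rewrite vnorm_scal, Cmod_real. reflexivity. Qed.
Lemma vscal_sub a x y : vscal a (vsub x y) = vsub (vscal a x) (vscal a y).
Proof. unfold vsub. rewrite vscal_distr_v, !vopp_scal, !vscal_assoc. f_equal. f_equal. Ceq. Qed.
Lemma vsub_scal a b x : vsub (vscal a x) (vscal b x) = vscal (Csub a b) x.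
Proof. unfold vsub, Csub. rewrite vscal_distr_c, vopp_scal, vscal_assoc. f_equal. f_equal. Ceq. Qed.
Lemma vadd_sub_assoc x y z : vadd x (vsub y z) = vsub (vadd x y) z.
Proof. unfold vsub. apply vadd_assoc. Qed.
End Ban2.

Lemma lin_zero {X : CBanach} (T : X -> X) :
  (forall a x, T (vscal a x) = vscal a (T x)) -> T vzero = vzero.
Proof. intro H. rewrite <- (vscal_C0 X vzero) at 1. rewrite H, vscal_C0. reflexivity. Qed.
Lemma lin_sub {X : CBanach} (T : X -> X) :
  (forall x y, T (vadd x y) = vadd (T x) (T y)) ->
  (forall a x, T (vscal a x) = vscal a (T x)) -> forall x y, T (vsub x y) = vsub (T x) (T y).
Proof. intros H1 H2 x y. unfold vsub. rewrite H1, !vopp_scal, H2. reflexivity. Qed.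

Lemma dual_zero {X : CBanach} (L : X -> Cplx) : Clinear_fun L -> L vzero = C0.
Proof. intros [_ H]. rewrite <- (vscal_C0 X vzero), H. Ceq. Qed.
Lemma dual_sub {X : CBanach} (L : X -> Cplx) : Clinear_fun L -> forall x y, L (vsub x y) = Csub (L x) (L y).
Proof. intros [H1 H2] x y. unfold vsub. rewrite H1, vopp_scal, H2. Ceq. Qed.
Lemma dual_bound {X : CBanach} (L : X -> Cplx) : in_dual L -> exists M, 0 < M /\ forall x, Cmod (L x) <= M * vnorm x.
Proof. intros [_ [M HM]]. exists (Rmax M 1). split. pose proof (Rmax_r M 1); lra.
  intro x. eapply Rle_trans. apply HM. apply Rmult_le_compat_r. apply vnorm_nonneg. apply Rmax_l. Qed.

Definition fderiv {X : CBanach} (f : X -> Cplx) (x : X) (L : X -> Cplx) : Prop :=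
  in_dual L /\ forall eps, 0 < eps -> exists delta, 0 < delta /\
      forall h, vnorm h < delta ->
        Cmod (Csub (Csub (f (vadd x h)) (f x)) (L h)) <= eps * vnorm h.

Section FD.
Variable X : CBanach.
Implicit Types (x h : X) (f g : X -> Cplx).

Lemma fderiv_lip f x L : fderiv f x L -> exists delta K, 0 < delta /\ 0 < K /\
  forall h, vnorm h < delta -> Cmod (Csub (f (vadd x h)) (f x)) <= K * vnorm h.
Proof. intros [HL H]. destruct (dual_bound L HL) as [M [HM HM']].
  destruct (H 1 Rlt_0_1) as [d [Hd Hd']]. exists d, (M+1). repeat split; try lra.
  intros h Hh. specialize (Hd' h Hh). specialize (HM' h).
  replace (Csub (f (vadd x h)) (f x)) with (Cadd (Csub (Csub (f (vadd x h)) (f x)) (L h)) (L h)) by Ceq.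
  eapply Rle_trans. apply Cmod_tri. lra. Qed.

Lemma dual_add (L1 L2 : X -> Cplx) : in_dual L1 -> in_dual L2 -> in_dual (fun h => Cadd (L1 h) (L2 h)).
Proof. intros H1 H2. pose proof (dual_bound _ H1) as [M1 [_ B1]]. pose proof (dual_bound _ H2) as [M2 [_ B2]].
  destruct H1 as [[A1 S1] _]. destruct H2 as [[A2 S2] _]. split; [split|].
  - intros x y. rewrite A1, A2. Ceq.
  - intros a x. rewrite S1, S2. Ceq.
  - exists (M1 + M2). intro x. eapply Rle_trans. apply Cmod_tri. specialize (B1 x); specialize (B2 x). lra. Qed.
Lemma dual_scal (c : Cplx) (L : X -> Cplx) : in_dual L -> in_dual (fun h => Cmul c (L h)).
Proof. intros H1. pose proof (dual_bound _ H1) as [M1 [_ B1]].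
  destruct H1 as [[A1 S1] _]. split; [split|].
  - intros x y. rewrite A1. Ceq.
  - intros a x. rewrite S1. Ceq.
  - exists (Cmod c * M1). intro x. rewrite Cmod_mul. rewrite Rmult_assoc. apply Rmult_le_compat_l. apply Cmod_nonneg. apply B1. Qed.
Lemma dual_zero_fun : in_dual (fun _ : X => C0).
Proof. split; [split|]. intros; Ceq. intros; Ceq. exists 0. intro. rewrite Cmod_C0. lra. Qed.
Lemma dual_comp (L : X -> Cplx) (A : X -> X) : in_dual L -> bounded_op A -> in_dual (fun h => L (A h)).
Proof. intros H1 [HA1 [HA2 [MA HMA]]]. pose proof (dual_bound _ H1) as [M1 [HM1 B1]].
  destruct H1 as [[A1 S1] _]. split; [split|].
  - intros x y. rewrite HA1, A1. reflexivity.
  - intros a x. rewrite HA2, S1. reflexivity.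
  - exists (M1 * MA). intro x. eapply Rle_trans. apply B1. rewrite Rmult_assoc. apply Rmult_le_compat_l; [lra|]. apply HMA. Qed.

Lemma fderiv_const (a : Cplx) x : fderiv (fun _ => a) x (fun _ => C0).
Proof. split. apply dual_zero_fun. intros eps He. exists 1. split. lra. intros h _.
  replace (Csub (Csub a a) C0) with C0 by Ceq. rewrite Cmod_C0. pose proof (vnorm_nonneg h). nra. Qed.

Lemma fderiv_dual (L : X -> Cplx) x : in_dual L -> fderiv L x L.
Proof. intro H. split; auto. intros eps He. exists 1. split. lra. intros h _.
  destruct H as [[A _] _]. rewrite A. replace (Csub (Csub (Cadd (L x) (L h)) (L x)) (L h)) with C0 by Ceq.
  rewrite Cmod_C0. pose proof (vnorm_nonneg h). nra. Qed.

Lemma fderiv_add f g x L1 L2 : fderiv f x L1 -> fderiv g x L2 ->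
  fderiv (fun y => Cadd (f y) (g y)) x (fun h => Cadd (L1 h) (L2 h)).
Proof. intros [H1 D1] [H2 D2]. split. apply dual_add; auto.
  intros eps He. destruct (D1 (eps/2)) as [d1 [Hd1 E1]]; [lra|]. destruct (D2 (eps/2)) as [d2 [Hd2 E2]]; [lra|].
  exists (Rmin d1 d2). split. apply Rmin_glb_lt; auto. intros h Hh.
  specialize (E1 h (Rlt_le_trans _ _ _ Hh (Rmin_l _ _))). specialize (E2 h (Rlt_le_trans _ _ _ Hh (Rmin_r _ _))).
  match goal with |- Cmod ?e <= _ => replace e with (Cadd (Csub (Csub (f (vadd x h)) (f x)) (L1 h)) (Csub (Csub (g (vadd x h)) (g x)) (L2 h))) by Ceq end.
  eapply Rle_trans. apply Cmod_tri. lra. Qed.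

Lemma fderiv_mul f g x L1 L2 : fderiv f x L1 -> fderiv g x L2 ->
  fderiv (fun y => Cmul (f y) (g y)) x (fun h => Cadd (Cmul (f x) (L2 h)) (Cmul (g x) (L1 h))).
Proof. intros F G. pose proof (fderiv_lip _ _ _ F) as [d1 [K1 [Hd1 [HK1 Lf]]]].
  pose proof (fderiv_lip _ _ _ G) as [d2 [K2 [Hd2 [HK2 Lg]]]].
  destruct F as [H1 D1]. destruct G as [H2 D2]. split. apply dual_add; apply dual_scal; auto.
  intros eps He. set (c := Cmod (f x) + Cmod (g x) + 1).
  assert (Hc : 0 < c) by (unfold c; pose proof (Cmod_nonneg (f x)); pose proof (Cmod_nonneg (g x)); lra).
  destruct (D1 (eps/(3*c))) as [e1 [He1 E1]]. apply Rdiv_lt_0_compat; lra.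
  destruct (D2 (eps/(3*c))) as [e2 [He2 E2]]. apply Rdiv_lt_0_compat; lra.
  set (e3 := eps / (3 * (K1 * K2))). assert (He3 : 0 < e3) by (unfold e3; apply Rdiv_lt_0_compat; nra).
  exists (Rmin (Rmin d1 d2) (Rmin (Rmin e1 e2) e3)). split.
  { repeat apply Rmin_glb_lt; auto. }
  intros h Hh. pose proof (vnorm_nonneg h).
  assert (h1 : vnorm h < d1) by (eapply Rlt_le_trans; [apply Hh|]; eauto using Rmin_l, Rmin_r, Rle_trans).
  assert (h2 : vnorm h < d2) by (eapply Rlt_le_trans; [apply Hh|]; eauto using Rmin_l, Rmin_r, Rle_trans).
  assert (h3 : vnorm h < e1) by (eapply Rlt_le_trans; [apply Hh|]; eauto using Rmin_l, Rmin_r, Rle_trans).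
  assert (h4 : vnorm h < e2) by (eapply Rlt_le_trans; [apply Hh|]; eauto using Rmin_l, Rmin_r, Rle_trans).
  assert (h5 : vnorm h < e3) by (eapply Rlt_le_trans; [apply Hh|]; eauto using Rmin_l, Rmin_r, Rle_trans).
  specialize (E1 h h3). specialize (E2 h h4). specialize (Lf h h1). specialize (Lg h h2).
  set (a1 := Csub (Csub (f (vadd x h)) (f x)) (L1 h)) in *.
  set (a2 := Csub (Csub (g (vadd x h)) (g x)) (L2 h)) in *.
  match goal with |- Cmod ?e <= _ => replace e with (Cadd (Cadd (Cmul (f x) a2) (Cmul (g x) a1)) (Cmul (Csub (f (vadd x h)) (f x)) (Csub (g (vadd x h)) (g x)))) by (unfold a1, a2; Ceq) end.
  eapply Rle_trans. apply Cmod_tri. eapply Rle_trans. apply Rplus_le_compat_r. apply Cmod_tri.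
  rewrite !Cmod_mul.
  assert (Cmod (f x) * Cmod a2 <= Cmod (f x) * (eps / (3*c) * vnorm h)) by (apply Rmult_le_compat_l; auto using Cmod_nonneg).
  assert (Cmod (g x) * Cmod a1 <= Cmod (g x) * (eps / (3*c) * vnorm h)) by (apply Rmult_le_compat_l; auto using Cmod_nonneg).
  assert (Cmod (Csub (f (vadd x h)) (f x)) * Cmod (Csub (g (vadd x h)) (g x)) <= (K1 * vnorm h) * (K2 * vnorm h)).
  { apply Rmult_le_compat; auto using Cmod_nonneg. }
  assert ((K1 * vnorm h) * (K2 * vnorm h) <= eps/3 * vnorm h).
  { replace ((K1 * vnorm h) * (K2 * vnorm h)) with ((K1*K2) * vnorm h * vnorm h) by ring.
    apply Rmult_le_compat_r; auto. unfold e3 in h5. apply Rlt_le.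
    apply (Rmult_lt_compat_l (K1*K2)) in h5; [|nra]. field_simplify in h5; nra. }
  assert ((Cmod (f x) + Cmod (g x)) * (eps / (3 * c) * vnorm h) <= eps/3 * vnorm h).
  { assert (0 <= eps / (3 * c) * vnorm h) by (apply Rmult_le_pos; [apply Rlt_le, Rdiv_lt_0_compat; lra| auto]).
    apply Rle_trans with (c * (eps / (3 * c) * vnorm h)).
    apply Rmult_le_compat_r; auto. unfold c; lra.
    right. field. lra. }
  nra. Qed.

Lemma fderiv_comp_affine f (A : X -> X) (b : X) x L : bounded_op A ->
  fderiv f (vadd (A x) b) L -> fderiv (fun y => f (vadd (A y) b)) x (fun h => L (A h)).
Proof. intros HA [HL D]. pose proof HA as [A1 [A2 [MA HMA]]].
  split. apply dual_comp; auto.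
  intros eps He. set (M := Rmax MA 1). assert (HM: 0 < M) by (unfold M; pose proof (Rmax_r MA 1); lra).
  assert (HMA' : forall x, vnorm (A x) <= M * vnorm x).
  { intro y. eapply Rle_trans. apply HMA. apply Rmult_le_compat_r. apply vnorm_nonneg. apply Rmax_l. }
  destruct (D (eps / M)) as [d [Hd E]]. apply Rdiv_lt_0_compat; lra.
  exists (d / M). split. apply Rdiv_lt_0_compat; lra. intros h Hh.
  assert (vnorm (A h) < d). { eapply Rle_lt_trans. apply HMA'. apply (Rmult_lt_compat_l M) in Hh; auto.
    replace (M * (d/M)) with d in Hh by (field; lra). lra. }
  specialize (E _ H). rewrite A1. rewrite vadd_swap. eapply Rle_trans. apply E.
  replace (eps * vnorm h) with (eps / M * (M * vnorm h)) by (field; lra).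
  apply Rmult_le_compat_l. apply Rlt_le, Rdiv_lt_0_compat; lra. apply HMA'. Qed.

End FD.

Lemma inv_ident a b l : a <> C0 -> b <> C0 ->
  Csub (Csub (Cinv a) (Cinv b)) (Cmul (Copp (Cmul (Cinv b) (Cinv b))) l) =
  Cadd (Cmul (Copp (Csub (Csub a b) l)) (Cmul (Cinv a) (Cinv b))) (Cmul l (Cmul (Csub a b) (Cmul (Cinv a) (Cmul (Cinv b) (Cinv b))))).
Proof. intros Ha Hb. pose proof (Cnorm2_pos a Ha). pose proof (Cnorm2_pos b Hb).
  destruct a as [a1 a2], b as [b1 b2], l as [l1 l2]. simpl in *.
  unfold Csub, Cadd, Cmul, Copp, Cinv; simpl. f_equal; field; lra. Qed.

Lemma C0_of_Cmod a : 0 < Cmod a -> a <> C0.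
Proof. intros H E. subst. rewrite Cmod_C0 in H. lra. Qed.

Lemma fderiv_inv {X : CBanach} (u : X -> Cplx) x L : u x <> C0 -> fderiv u x L ->
  fderiv (fun y => Cinv (u y)) x (fun h => Cmul (Copp (Cmul (Cinv (u x)) (Cinv (u x)))) (L h)).
Proof. intros Hu F. pose proof (fderiv_lip _ _ _ _ F) as [d1 [K [Hd1 [HK Lu]]]].
  destruct F as [HL D]. split. apply dual_scal; auto.
  destruct (dual_bound _ HL) as [M [HM BM]].
  set (m := Cmod (u x)). assert (Hm : 0 < m) by (apply Cmod_pos; auto).
  intros eps He. destruct (D (eps * m * m / 4)) as [d2 [Hd2 E2]].
  { apply Rdiv_lt_0_compat; [|lra]. repeat apply Rmult_lt_0_compat; lra. }
  set (d3 := m / (2 * K)). set (d4 := eps * m * m * m / (4 * M * K)).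
  assert (0 < d3) by (unfold d3; apply Rdiv_lt_0_compat; lra).
  assert (0 < d4) by (unfold d4; apply Rdiv_lt_0_compat; repeat apply Rmult_lt_0_compat; lra).
  exists (Rmin (Rmin d1 d2) (Rmin d3 d4)). split. repeat apply Rmin_glb_lt; auto.
  intros h Hh. pose proof (vnorm_nonneg h).
  assert (h1 : vnorm h < d1) by (eapply Rlt_le_trans; [apply Hh|]; eauto using Rmin_l, Rmin_r, Rle_trans).
  assert (h2 : vnorm h < d2) by (eapply Rlt_le_trans; [apply Hh|]; eauto using Rmin_l, Rmin_r, Rle_trans).
  assert (h3 : vnorm h < d3) by (eapply Rlt_le_trans; [apply Hh|]; eauto using Rmin_l, Rmin_r, Rle_trans).
  assert (h4 : vnorm h < d4) by (eapply Rlt_le_trans; [apply Hh|]; eauto using Rmin_l, Rmin_r, Rle_trans).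
  specialize (Lu h h1). specialize (E2 h h2). specialize (BM h).
  assert (Hu' : m / 2 <= Cmod (u (vadd x h))).
  { pose proof (Cmod_rev (u x) (u (vadd x h))). rewrite Cmod_sub_sym in Lu. idtac.
    assert (K * vnorm h <= m / 2). { unfold d3 in h3. apply (Rmult_lt_compat_l K) in h3; auto.
      replace (K * (m / (2*K))) with (m/2) in h3 by (field; lra). lra. } unfold m in *. lra. }
  assert (Hu'0 : u (vadd x h) <> C0) by (apply C0_of_Cmod; lra).
  rewrite inv_ident; auto. eapply Rle_trans. apply Cmod_tri. rewrite !Cmod_mul, Cmod_opp, !Cmod_inv; auto. fold m.
  assert (/ Cmod (u (vadd x h)) <= 2 / m).
  { replace (2/m) with (/ (m/2)) by (field; lra). apply Rinv_le_contravar; lra. }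
  assert (0 <= / Cmod (u (vadd x h))) by (left; apply Rinv_0_lt_compat; lra).
  assert (A1 : Cmod (Csub (Csub (u (vadd x h)) (u x)) (L h)) * (/ Cmod (u (vadd x h)) * / m) <= eps / 2 * vnorm h).
  { apply Rle_trans with ((eps * m * m / 4 * vnorm h) * (2 / m * / m)).
    apply Rmult_le_compat; auto using Cmod_nonneg. apply Rmult_le_pos; auto. left; apply Rinv_0_lt_compat; lra.
    apply Rmult_le_compat_r; auto. left; apply Rinv_0_lt_compat; lra.
    right. field. lra. }
  assert (A2 : Cmod (L h) * (Cmod (Csub (u (vadd x h)) (u x)) * (/ Cmod (u (vadd x h)) * (/ m * / m))) <= eps / 2 * vnorm h).
  { apply Rle_trans with ((M * vnorm h) * ((K * vnorm h) * (2 / m * (/ m * / m)))).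
    apply Rmult_le_compat; auto using Cmod_nonneg.
    apply Rmult_le_pos; auto using Cmod_nonneg. apply Rmult_le_pos; auto. left. apply Rmult_lt_0_compat; apply Rinv_0_lt_compat; lra.
    apply Rmult_le_compat; auto using Cmod_nonneg. apply Rmult_le_pos; auto. left. apply Rmult_lt_0_compat; apply Rinv_0_lt_compat; lra.
    apply Rmult_le_compat_r; auto. left. apply Rmult_lt_0_compat; apply Rinv_0_lt_compat; lra.
    replace ((M * vnorm h) * ((K * vnorm h) * (2 / m * (/ m * / m)))) with ((2 * M * K / (m*m*m)) * vnorm h * vnorm h) by (field; lra).
    apply Rle_trans with ((2 * M * K / (m*m*m)) * d4 * vnorm h).
    apply Rmult_le_compat_r; auto. apply Rmult_le_compat_l; [|lra]. apply Rlt_le, Rdiv_lt_0_compat; [nra| repeat apply Rmult_lt_0_compat; lra].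
    unfold d4. right. field. repeat split; lra. }
  lra. Qed.

(** * closure properties of A_u(B) *)
Section AU.
Variable X : CBanach.
Implicit Types (f g u : X -> Cplx).

Lemma holo_iff f : holomorphic_on_B f <-> forall x, inB x -> exists L, fderiv f x L.
Proof. unfold holomorphic_on_B, fderiv. tauto. Qed.

Lemma in_Au_const a : in_Au (fun _ : X => a).
Proof. split; [|split].
  - exists (Cmod a). intros; lra.
  - apply holo_iff. intros x _. exists (fun _ => C0). apply fderiv_const.
  - intros eps He. exists 1. split. lra. intros. rewrite Csub_diag, Cmod_C0. lra. Qed.

Lemma in_Au_add f g : in_Au f -> in_Au g -> in_Au (fun x => Cadd (f x) (g x)).
Proof. intros [[Mf Bf] [Hf Uf]] [[Mg Bg] [Hg Ug]]. split; [|split].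
  - exists (Mf + Mg). intros x Hx. eapply Rle_trans. apply Cmod_tri. specialize (Bf x Hx); specialize (Bg x Hx). lra.
  - apply holo_iff. intros x Hx. apply holo_iff in Hf, Hg. destruct (Hf x Hx) as [L1 H1]. destruct (Hg x Hx) as [L2 H2].
    eexists. apply fderiv_add; eauto.
  - intros eps He. destruct (Uf (eps/2)) as [d1 [Hd1 U1]]; [lra|]. destruct (Ug (eps/2)) as [d2 [Hd2 U2]]; [lra|].
    exists (Rmin d1 d2). split. apply Rmin_glb_lt; auto. intros x y Hx Hy Hxy.
    specialize (U1 x y Hx Hy (Rlt_le_trans _ _ _ Hxy (Rmin_l _ _))). specialize (U2 x y Hx Hy (Rlt_le_trans _ _ _ Hxy (Rmin_r _ _))).
    replace (Csub (Cadd (f x) (g x)) (Cadd (f y) (g y))) with (Cadd (Csub (f x) (f y)) (Csub (g x) (g y))) by Ceq.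
    eapply Rle_lt_trans. apply Cmod_tri. lra. Qed.

Lemma in_Au_mul f g : in_Au f -> in_Au g -> in_Au (fun x => Cmul (f x) (g x)).
Proof. intros [[Mf Bf] [Hf Uf]] [[Mg Bg] [Hg Ug]].
  assert (Hf0 : forall x, inB x -> 0 <= Mf) by (intros x Hx; specialize (Bf x Hx); pose proof (Cmod_nonneg (f x)); lra).
  split; [|split].
  - exists (Rmax Mf 0 * Rmax Mg 0). intros x Hx. rewrite Cmod_mul. apply Rmult_le_compat; auto using Cmod_nonneg.
    eapply Rle_trans; [apply Bf; auto| apply Rmax_l]. eapply Rle_trans; [apply Bg; auto| apply Rmax_l].
  - apply holo_iff. intros x Hx. apply holo_iff in Hf, Hg. destruct (Hf x Hx) as [L1 H1]. destruct (Hg x Hx) as [L2 H2].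
    eexists. apply fderiv_mul; eauto.
  - intros eps He. set (A := Rmax Mf 0 + Rmax Mg 0 + 1).
    assert (HA : 0 < A) by (unfold A; pose proof (Rmax_r Mf 0); pose proof (Rmax_r Mg 0); lra).
    destruct (Uf (eps/A)) as [d1 [Hd1 U1]]. apply Rdiv_lt_0_compat; lra.
    destruct (Ug (eps/A)) as [d2 [Hd2 U2]]. apply Rdiv_lt_0_compat; lra.
    exists (Rmin d1 d2). split. apply Rmin_glb_lt; auto. intros x y Hx Hy Hxy.
    specialize (U1 x y Hx Hy (Rlt_le_trans _ _ _ Hxy (Rmin_l _ _))). specialize (U2 x y Hx Hy (Rlt_le_trans _ _ _ Hxy (Rmin_r _ _))).
    replace (Csub (Cmul (f x) (g x)) (Cmul (f y) (g y))) with (Cadd (Cmul (f x) (Csub (g x) (g y))) (Cmul (g y) (Csub (f x) (f y)))) by Ceq.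
    eapply Rle_lt_trans. apply Cmod_tri. rewrite !Cmod_mul.
    assert (Cmod (f x) <= Rmax Mf 0) by (eapply Rle_trans; [apply Bf; auto| apply Rmax_l]).
    assert (Cmod (g y) <= Rmax Mg 0) by (eapply Rle_trans; [apply Bg; auto| apply Rmax_l]).
    assert (Cmod (f x) * Cmod (Csub (g x) (g y)) <= Rmax Mf 0 * (eps / A)) by (apply Rmult_le_compat; auto using Cmod_nonneg; lra).
    assert (Cmod (g y) * Cmod (Csub (f x) (f y)) <= Rmax Mg 0 * (eps / A)) by (apply Rmult_le_compat; auto using Cmod_nonneg; lra).
    assert ((Rmax Mf 0 + Rmax Mg 0) * (eps / A) < eps).
    { replace eps with (A * (eps / A)) at 2 by (field; lra). apply Rmult_lt_compat_r. apply Rdiv_lt_0_compat; lra. unfold A; lra. }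
    lra. Qed.

Lemma in_Au_dual (L : X -> Cplx) : in_dual L -> in_Au L.
Proof. intro HL. destruct (dual_bound _ HL) as [M [HM BM]]. split; [|split].
  - exists M. intros x Hx. eapply Rle_trans. apply BM. unfold inB in Hx. pose proof (vnorm_nonneg x). nra.
  - apply holo_iff. intros x _. exists L. apply fderiv_dual; auto.
  - intros eps He. exists (eps / M). split. apply Rdiv_lt_0_compat; lra. intros x y _ _ Hxy.
    destruct HL as [HL _]. rewrite <- dual_sub; auto. eapply Rle_lt_trans. apply BM.
    apply (Rmult_lt_compat_l M) in Hxy; auto. replace (M * (eps / M)) with eps in Hxy by (field; lra). auto. Qed.

Lemma in_Au_comp_affine f (A : X -> X) (b : X) : bounded_op A ->
  (forall x, inB x -> inB (vadd (A x) b)) -> in_Au f -> in_Au (fun y => f (vadd (A y) b)).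
Proof. intros HA HT [[Mf Bf] [Hf Uf]]. pose proof HA as [A1 [A2 [MA HMA]]].
  set (M := Rmax MA 1). assert (HM: 0 < M) by (unfold M; pose proof (Rmax_r MA 1); lra).
  assert (HMA' : forall x, vnorm (A x) <= M * vnorm x).
  { intro y. eapply Rle_trans. apply HMA. apply Rmult_le_compat_r. apply vnorm_nonneg. apply Rmax_l. }
  split; [|split].
  - exists Mf. intros x Hx. apply Bf. auto.
  - apply holo_iff. apply holo_iff in Hf. intros x Hx. destruct (Hf _ (HT x Hx)) as [L HL].
    eexists. apply fderiv_comp_affine; eauto.
  - intros eps He. destruct (Uf eps He) as [d [Hd U]]. exists (d / M). split. apply Rdiv_lt_0_compat; lra.
    intros x y Hx Hy Hxy. apply U; auto. rewrite vsub_add_r. rewrite <- lin_sub; auto.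
    eapply Rle_lt_trans. apply HMA'. apply (Rmult_lt_compat_l M) in Hxy; auto.
    replace (M * (d / M)) with d in Hxy by (field; lra). auto. Qed.

Lemma in_Au_inv u m : 0 < m -> (forall x, inB x -> m <= Cmod (u x)) -> in_Au u -> in_Au (fun x => Cinv (u x)).
Proof. intros Hm Hb [[Mu Bu] [Hu Uu]].
  assert (Hne : forall x, inB x -> u x <> C0) by (intros x Hx; apply C0_of_Cmod; specialize (Hb x Hx); lra).
  split; [|split].
  - exists (/ m). intros x Hx. rewrite Cmod_inv; auto. apply Rinv_le_contravar; auto.
  - apply holo_iff. apply holo_iff in Hu. intros x Hx. destruct (Hu x Hx) as [L HL].
    eexists. apply fderiv_inv; eauto.
  - intros eps He. destruct (Uu (eps * m * m)) as [d [Hd U]]. repeat apply Rmult_lt_0_compat; lra.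
    exists d. split; auto. intros x y Hx Hy Hxy. specialize (U x y Hx Hy Hxy).
    replace (Csub (Cinv (u x)) (Cinv (u y))) with (Cmul (Csub (u y) (u x)) (Cmul (Cinv (u x)) (Cinv (u y)))).
    2:{ pose proof (Hne x Hx). pose proof (Hne y Hy). pose proof (Cnorm2_pos _ H). pose proof (Cnorm2_pos _ H0).
        destruct (u x) as [a1 a2], (u y) as [b1 b2]. simpl in *. unfold Csub, Cadd, Cmul, Copp, Cinv; simpl. f_equal; field; lra. }
    rewrite !Cmod_mul, !Cmod_inv by auto. rewrite Cmod_sub_sym.
    pose proof (Hb x Hx). pose proof (Hb y Hy).
    assert (/ Cmod (u x) * / Cmod (u y) <= / m * / m).
    { apply Rmult_le_compat; try (left; apply Rinv_0_lt_compat; lra); apply Rinv_le_contravar; auto. }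
    apply Rle_lt_trans with (Cmod (Csub (u x) (u y)) * (/ m * / m)).
    apply Rmult_le_compat_l; auto using Cmod_nonneg.
    apply Rlt_le_trans with (eps * m * m * (/m * /m)). apply Rmult_lt_compat_r; auto.
    apply Rmult_lt_0_compat; apply Rinv_0_lt_compat; lra. right; field; lra. Qed.
End AU.

Section CH.
Variable X : CBanach.
Variable phi : (X -> Cplx) -> Cplx.
Hypothesis Hphi : character phi.

Lemma phi_ext f g : in_Au f -> in_Au g -> (forall x, inB x -> f x = g x) -> phi f = phi g.
Proof. destruct Hphi as [H _]. apply H. Qed.
Lemma phi_add f g : in_Au f -> in_Au g -> phi (fun x => Cadd (f x) (g x)) = Cadd (phi f) (phi g).
Proof. destruct Hphi as [_ [H _]]. apply H. Qed.
Lemma phi_mul f g : in_Au f -> in_Au g -> phi (fun x => Cmul (f x) (g x)) = Cmul (phi f) (phi g).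
Proof. destruct Hphi as [_ [_ [_ [H _]]]]. apply H. Qed.
Lemma phi_scal a f : in_Au f -> phi (fun x => Cmul a (f x)) = Cmul a (phi f).
Proof. destruct Hphi as [_ [_ [H _]]]. apply H. Qed.

Lemma phi_one : phi (fun _ => C1) = C1.
Proof. destruct Hphi as [_ [_ [_ [Hm [f [Hf Hn]]]]]].
  pose proof (Hm (fun _ => C1) f (in_Au_const X C1) Hf).
  cbv beta in H. assert (E: phi (fun x => Cmul C1 (f x)) = phi f) by (f_equal; extensionality x; apply Cmul_1_l).
  rewrite E in H.
  set (a := phi (fun _ => C1)) in *. set (b := phi f) in *.
  assert (Cmul (Cmul a b) (Cinv b) = Cmul b (Cinv b)) by (rewrite <- H; reflexivity).
  rewrite <- Cmul_assoc, Cmul_inv_r in H0 by auto. rewrite Cmul_1_r in H0. auto. Qed.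

Lemma phi_const a : phi (fun _ => a) = a.
Proof. replace (fun _ : X => a) with (fun x : X => Cmul a ((fun _ => C1) x)) by (extensionality x; apply Cmul_1_r).
  rewrite phi_scal, phi_one. apply Cmul_1_r. apply in_Au_const. Qed.

Lemma in_Au_scal a f : in_Au f -> in_Au (fun x : X => Cmul a (f x)).
Proof. intro. apply (in_Au_mul X (fun _ => a) f); auto. apply in_Au_const. Qed.

Lemma in_Au_sub f g : in_Au f -> in_Au g -> in_Au (fun x : X => Csub (f x) (g x)).
Proof. intros. replace (fun x => Csub (f x) (g x)) with (fun x => Cadd (f x) (Cmul (-1,0) (g x))).
  apply in_Au_add; auto. apply in_Au_scal; auto. extensionality x. Ceq. Qed.

Lemma phi_sub f g : in_Au f -> in_Au g -> phi (fun x => Csub (f x) (g x)) = Csub (phi f) (phi g).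
Proof. intros. replace (fun x => Csub (f x) (g x)) with (fun x => Cadd (f x) (Cmul (-1,0) (g x))).
  rewrite phi_add, phi_scal; auto. Ceq. apply in_Au_scal; auto. extensionality x. Ceq. Qed.

Lemma phi_bound g M : in_Au g -> (forall x, inB x -> Cmod (g x) <= M) -> Cmod (phi g) <= M.
Proof. intros Hg HM. destruct (Rle_dec (Cmod (phi g)) M) as [h|h]; auto. exfalso.
  set (l := phi g) in *. set (u := fun x => Csub l (g x)).
  assert (Hu : in_Au u) by (apply in_Au_sub; auto; apply in_Au_const).
  assert (Hb : forall x, inB x -> Cmod l - M <= Cmod (u x)).
  { intros x Hx. unfold u. pose proof (Cmod_rev l (g x)). specialize (HM x Hx). lra. }
  assert (Hk : in_Au (fun x => Cinv (u x))) by (apply (in_Au_inv X u (Cmod l - M)); auto; lra).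
  assert (E1 : phi (fun x => Cmul (u x) (Cinv (u x))) = phi (fun _ => C1)).
  { apply phi_ext. apply in_Au_mul; auto. apply in_Au_const. intros x Hx. apply Cmul_inv_r.
    apply C0_of_Cmod. specialize (Hb x Hx). lra. }
  rewrite phi_mul, phi_one in E1; auto.
  assert (phi u = C0). { unfold u. rewrite phi_sub, phi_const. apply Csub_diag. apply in_Au_const. auto. }
  rewrite H, Cmul_0_l in E1. unfold C0, C1 in E1. injection E1. lra. Qed.

End CH.

(** * The complex plane as a CBanach space *)
Lemma C_complete : forall u : nat -> Cplx,
    (forall eps, 0 < eps -> exists N, forall m n, (N <= m)%nat -> (N <= n)%nat ->
        Cmod (Cadd (u m) (Copp (u n))) < eps) ->
    exists l, forall eps, 0 < eps -> exists N, forall n, (N <= n)%nat ->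
        Cmod (Cadd (u n) (Copp l)) < eps.
Proof. intros u Hu.
  assert (C1' : Cauchy_crit (fun n => fst (u n))).
  { intros e He. destruct (Hu e He) as [N HN]. exists N. intros n m Hn Hm. unfold Rdist.
    pose proof (Cmod_fst (Cadd (u n) (Copp (u m)))). specialize (HN n m Hn Hm). simpl in H.
    eapply Rle_lt_trans; [|apply HN]. replace (fst (u n) - fst (u m)) with (fst (u n) + - fst (u m)) by ring. auto. }
  assert (C2' : Cauchy_crit (fun n => snd (u n))).
  { intros e He. destruct (Hu e He) as [N HN]. exists N. intros n m Hn Hm. unfold Rdist.
    pose proof (Cmod_snd (Cadd (u n) (Copp (u m)))). specialize (HN n m Hn Hm). simpl in H.
    eapply Rle_lt_trans; [|apply HN]. replace (snd (u n) - snd (u m)) with (snd (u n) + - snd (u m)) by ring. auto. }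
  destruct (R_complete _ C1') as [l1 H1]. destruct (R_complete _ C2') as [l2 H2].
  exists (l1, l2). intros e He. destruct (H1 (e/2)) as [N1 HN1]; [lra|]. destruct (H2 (e/2)) as [N2 HN2]; [lra|].
  exists (Nat.max N1 N2). intros n Hn. eapply Rle_lt_trans. apply Cmod_le_sum.
  specialize (HN1 n ltac:(lia)). specialize (HN2 n ltac:(lia)). unfold Rdist in *. simpl. unfold Rminus in *. lra. Qed.

Definition CC : CBanach.
Proof. refine {| car := Cplx; vzero := C0; vadd := Cadd; vopp := Copp; vscal := Cmul; vnorm := Cmod |}.
  - intros; Ceq. - intros; Ceq. - intros; Ceq. - intros; Ceq. - intros; Ceq. - intros; Ceq.
  - intros; Ceq. - intros; Ceq. - apply Cmod_nonneg. - apply Cmod_eq0. - apply Cmod_mul. - apply Cmod_tri.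
  - apply C_complete. Defined.

Definition fderivC (g : Cplx -> Cplx) (z : Cplx) (L : Cplx -> Cplx) := @fderiv CC g z L.

Lemma dualC_form (L : Cplx -> Cplx) : @in_dual CC L -> forall h, L h = Cmul h (L C1).
Proof. intros [[_ H] _] h. rewrite <- H. f_equal. simpl. symmetry. apply Cmul_1_r. Qed.

Lemma fderivC_est g z L : fderivC g z L -> forall eps, 0 < eps -> exists delta, 0 < delta /\
   forall w, Cmod (Csub w z) < delta -> Cmod (Csub (Csub (g w) (g z)) (Cmul (L C1) (Csub w z))) <= eps * Cmod (Csub w z).
Proof. intros [HL D] eps He. destruct (D eps He) as [d [Hd E]]. exists d; split; auto.
  intros w Hw. specialize (E (Csub w z) Hw). simpl in E. rewrite (dualC_form L HL) in E.
  replace (Cadd z (Csub w z)) with w in E by Ceq. rewrite Cmul_comm. exact E. Qed.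

Definition Ccont (g : Cplx -> Cplx) z := forall eps, 0 < eps -> exists delta, 0 < delta /\
   forall w, Cmod (Csub w z) < delta -> Cmod (Csub (g w) (g z)) < eps.

Lemma fderivC_cont g z L : fderivC g z L -> Ccont g z.
Proof. intro F. destruct (fderiv_lip CC _ _ _ F) as [d [K [Hd [HK H]]]].
  intros eps He. exists (Rmin d (eps / K)). split. apply Rmin_glb_lt; auto. apply Rdiv_lt_0_compat; lra.
  intros w Hw. specialize (H (Csub w z)). simpl in H. replace (Cadd z (Csub w z)) with w in H by Ceq.
  eapply Rle_lt_trans. apply H. eapply Rlt_le_trans; [exact Hw|apply Rmin_l].
  apply Rlt_le_trans with (K * (eps / K)). apply Rmult_lt_compat_l; auto. eapply Rlt_le_trans. apply Hw. apply Rmin_r.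
  right; field; lra. Qed.

From Coquelicot Require Import Hierarchy RInt Continuity Derive RInt_analysis AutoDerive.
Import Pilot.Defs.

Lemma cont_R (f : R -> R) x : (forall eps, 0 < eps -> exists delta, 0 < delta /\ forall t, Rabs (t - x) < delta -> Rabs (f t - f x) < eps) -> continuous f x.
Proof. intro H. apply continuity_pt_filterlim. unfold continuity_pt, continue_in, limit1_in, limit_in.
  intros eps He. destruct (H eps He) as [d [Hd Hd']]. exists d. split; auto. intros t [_ Ht]. simpl in *. unfold Rdist in *. auto. Qed.

Lemma Cmod_hor t t0 y : Cmod (Csub (t, y) (t0, y)) = Rabs (t - t0).
Proof. unfold Csub, Cadd, Copp; simpl. replace (y + - y) with 0 by ring. rewrite Cmod_real. f_equal; ring. Qed.
Lemma Cmod_ver t t0 x : Cmod (Csub (x, t) (x, t0)) = Rabs (t - t0).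
Proof. unfold Csub, Cadd, Copp, Cmod; simpl. replace (x + - x) with 0 by ring. rewrite <- sqrt_Rsqr_abs. f_equal. unfold Rsqr; ring. Qed.

Lemma cont_fst_h g t0 y : Ccont g (t0, y) -> continuous (fun t => fst (g (t, y))) t0.
Proof. intro H. apply cont_R. intros e He. destruct (H e He) as [d [Hd H']]. exists d; split; auto.
  intros t Ht. rewrite <- Cmod_hor with (y := y) in Ht. specialize (H' _ Ht).
  eapply Rle_lt_trans; [|apply H']. pose proof (Cmod_fst (Csub (g (t, y)) (g (t0, y)))). simpl in H0. unfold Rminus. auto. Qed.
Lemma cont_snd_h g t0 y : Ccont g (t0, y) -> continuous (fun t => snd (g (t, y))) t0.
Proof. intro H. apply cont_R. intros e He. destruct (H e He) as [d [Hd H']]. exists d; split; auto.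
  intros t Ht. rewrite <- Cmod_hor with (y := y) in Ht. specialize (H' _ Ht).
  eapply Rle_lt_trans; [|apply H']. pose proof (Cmod_snd (Csub (g (t, y)) (g (t0, y)))). simpl in H0. unfold Rminus. auto. Qed.
Lemma cont_fst_v g t0 x : Ccont g (x, t0) -> continuous (fun t => fst (g (x, t))) t0.
Proof. intro H. apply cont_R. intros e He. destruct (H e He) as [d [Hd H']]. exists d; split; auto.
  intros t Ht. rewrite <- Cmod_ver with (x := x) in Ht. specialize (H' _ Ht).
  eapply Rle_lt_trans; [|apply H']. pose proof (Cmod_fst (Csub (g (x, t)) (g (x, t0)))). simpl in H0. unfold Rminus. auto. Qed.
Lemma cont_snd_v g t0 x : Ccont g (x, t0) -> continuous (fun t => snd (g (x, t))) t0.
Proof. intro H. apply cont_R. intros e He. destruct (H e He) as [d [Hd H']]. exists d; split; auto.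
  intros t Ht. rewrite <- Cmod_ver with (x := x) in Ht. specialize (H' _ Ht).
  eapply Rle_lt_trans; [|apply H']. pose proof (Cmod_snd (Csub (g (x, t)) (g (x, t0)))). simpl in H0. unfold Rminus. auto. Qed.

Definition CI (h : R -> Cplx) (a b : R) : Cplx :=
  (RInt (fun t => fst (h t)) a b, RInt (fun t => snd (h t)) a b).

Definition cint (h : R -> Cplx) a b := ex_RInt (fun t => fst (h t)) a b /\ ex_RInt (fun t => snd (h t)) a b.

Lemma RInt_R_const (c a b : R) : RInt (fun _ => c) a b = (b - a) * c.
Proof. rewrite RInt_const. reflexivity. Qed.

Lemma CI_chasles h a b c : cint h a b -> cint h b c -> Cadd (CI h a b) (CI h b c) = CI h a c.
Proof. intros [A1 A2] [B1 B2]. unfold CI, Cadd; simpl. f_equal; apply (RInt_Chasles (V := R_CompleteNormedModule)); auto. Qed.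

Lemma CI_add h1 h2 a b : cint h1 a b -> cint h2 a b -> CI (fun t => Cadd (h1 t) (h2 t)) a b = Cadd (CI h1 a b) (CI h2 a b).
Proof. intros [A1 A2] [B1 B2]. unfold CI, Cadd; simpl. f_equal; apply (RInt_plus (V := R_CompleteNormedModule)); auto. Qed.

Lemma CI_scal c h a b : cint h a b -> CI (fun t => Cmul c (h t)) a b = Cmul c (CI h a b).
Proof. intros [A1 A2]. unfold CI, Cmul; simpl. f_equal.
  - rewrite (RInt_minus (V := R_CompleteNormedModule) (fun t => fst c * fst (h t)) (fun t => snd c * snd (h t))).
    rewrite (RInt_scal (V := R_CompleteNormedModule) (fun t => fst (h t))), (RInt_scal (V := R_CompleteNormedModule) (fun t => snd (h t))); auto.
    apply (ex_RInt_scal (V := R_CompleteNormedModule)); auto. apply (ex_RInt_scal (V := R_CompleteNormedModule)); auto.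
  - rewrite (RInt_plus (V := R_CompleteNormedModule) (fun t => fst c * snd (h t)) (fun t => snd c * fst (h t))).
    rewrite (RInt_scal (V := R_CompleteNormedModule) (fun t => fst (h t))), (RInt_scal (V := R_CompleteNormedModule) (fun t => snd (h t))); auto.
    apply (ex_RInt_scal (V := R_CompleteNormedModule)); auto. apply (ex_RInt_scal (V := R_CompleteNormedModule)); auto. Qed.

Lemma cint_add h1 h2 a b : cint h1 a b -> cint h2 a b -> cint (fun t => Cadd (h1 t) (h2 t)) a b.
Proof. intros [A1 A2] [B1 B2]. split; simpl; apply (ex_RInt_plus (V := R_CompleteNormedModule)); auto. Qed.
Lemma cint_scal c h a b : cint h a b -> cint (fun t => Cmul c (h t)) a b.
Proof. intros [A1 A2]. split; simpl.
  apply (ex_RInt_minus (V := R_CompleteNormedModule)); apply (ex_RInt_scal (V := R_CompleteNormedModule)); auto.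
  apply (ex_RInt_plus (V := R_CompleteNormedModule)); apply (ex_RInt_scal (V := R_CompleteNormedModule)); auto. Qed.

Lemma CI_ext h1 h2 a b : a <= b -> (forall t, a <= t <= b -> h1 t = h2 t) -> CI h1 a b = CI h2 a b.
Proof. intros Hab H. unfold CI. f_equal; apply RInt_ext; intros t Ht; rewrite Rmin_left, Rmax_right in Ht by lra;
  rewrite H; auto; lra. Qed.

Lemma dot_le (p q : Cplx) : fst p * fst q + snd p * snd q <= Cmod p * Cmod q.
Proof. destruct p as [p1 p2], q as [q1 q2]. simpl. pose proof (Cmod_fst (Cmul (p1, - p2) (q1, q2))).
  rewrite Cmod_mul in H. replace (Cmod (p1, -p2)) with (Cmod (p1,p2)) in H by (unfold Cmod; simpl; f_equal; ring).
  unfold Cmul in H; simpl in H. eapply Rle_trans; [|apply H]. eapply Rle_trans; [|apply Rle_abs]. right; ring. Qed.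

Lemma CI_bound h a b K : a <= b -> cint h a b -> (forall t, a <= t <= b -> Cmod (h t) <= K) -> Cmod (CI h a b) <= (b - a) * K.
Proof. intros Hab [A1 A2] HK. set (A := CI h a b). destruct (Req_dec (Cmod A) 0) as [E|E].
  { rewrite E. destruct (Req_dec a b). subst. lra. assert (0 <= K) by (specialize (HK a ltac:(lra)); pose proof (Cmod_nonneg (h a)); lra). nra. }
  assert (Hm : 0 < Cmod A) by (pose proof (Cmod_nonneg A); lra).
  assert (E2 : Cmod A * Cmod A = RInt (fun t => fst A * fst (h t) + snd A * snd (h t)) a b).
  { rewrite (RInt_plus (V := R_CompleteNormedModule) (fun t => fst A * fst (h t)) (fun t => snd A * snd (h t))).
    rewrite (RInt_scal (V := R_CompleteNormedModule) (fun t => fst (h t))), (RInt_scal (V := R_CompleteNormedModule) (fun t => snd (h t))); auto.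
    simpl. unfold plus, scal; simpl. unfold mult; simpl.
    unfold Cmod. rewrite sqrt_sqrt. unfold A, CI; simpl. ring.
    pose proof (Rle_0_sqr (fst A)); pose proof (Rle_0_sqr (snd A)); unfold Rsqr in *; lra.
    apply (ex_RInt_scal (V := R_CompleteNormedModule)); auto. apply (ex_RInt_scal (V := R_CompleteNormedModule)); auto. }
  assert (E3 : RInt (fun t => fst A * fst (h t) + snd A * snd (h t)) a b <= RInt (fun _ => Cmod A * K) a b).
  { apply RInt_le; auto.
    apply (ex_RInt_plus (V := R_CompleteNormedModule)); apply (ex_RInt_scal (V := R_CompleteNormedModule)); auto.
    apply ex_RInt_const.
    intros t Ht. specialize (HK t ltac:(lra)). eapply Rle_trans. apply dot_le. apply Rmult_le_compat_l; auto. lra. }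
  rewrite RInt_R_const in E3. nra. Qed.

(** * rectangle boundary integrals *)
Definition Hs (g : Cplx -> Cplx) y a b := CI (fun t => g (t, y)) a b.
Definition Vs (g : Cplx -> Cplx) x c d := Cmul (0,1) (CI (fun t => g (x, t)) c d).
Definition Bd g a b c d := Cadd (Csub (Hs g c a b) (Hs g d a b)) (Csub (Vs g b c d) (Vs g a c d)).
Definition onBd a b c d (z : Cplx) := (a <= fst z <= b /\ (snd z = c \/ snd z = d)) \/ (c <= snd z <= d /\ (fst z = a \/ fst z = b)).
Definition bdcont g a b c d := forall z, onBd a b c d z -> Ccont g z.

Lemma cint_h g y a b : a <= b -> (forall t, a <= t <= b -> Ccont g (t, y)) -> cint (fun t => g (t, y)) a b.
Proof. intros Hab H. split; apply (ex_RInt_continuous (V := R_CompleteNormedModule)); intros z Hz;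
  rewrite Rmin_left, Rmax_right in Hz by lra. apply cont_fst_h; auto. apply cont_snd_h; auto. Qed.
Lemma cint_v g x c d : c <= d -> (forall t, c <= t <= d -> Ccont g (x, t)) -> cint (fun t => g (x, t)) c d.
Proof. intros Hab H. split; apply (ex_RInt_continuous (V := R_CompleteNormedModule)); intros z Hz;
  rewrite Rmin_left, Rmax_right in Hz by lra. apply cont_fst_v; auto. apply cont_snd_v; auto. Qed.

Section BdL.
Variables a b c d : R.
Hypothesis Hab : a <= b.
Hypothesis Hcd : c <= d.

Lemma bd_hc g : bdcont g a b c d -> cint (fun t => g (t, c)) a b.
Proof. intro H. apply cint_h; auto. intros t Ht. apply H. left. simpl. auto. Qed.
Lemma bd_hd g : bdcont g a b c d -> cint (fun t => g (t, d)) a b.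
Proof. intro H. apply cint_h; auto. intros t Ht. apply H. left. simpl. auto. Qed.
Lemma bd_va g : bdcont g a b c d -> cint (fun t => g (a, t)) c d.
Proof. intro H. apply cint_v; auto. intros t Ht. apply H. right. simpl. auto. Qed.
Lemma bd_vb g : bdcont g a b c d -> cint (fun t => g (b, t)) c d.
Proof. intro H. apply cint_v; auto. intros t Ht. apply H. right. simpl. auto. Qed.

Lemma Bd_add g1 g2 : bdcont g1 a b c d -> bdcont g2 a b c d ->
  Bd (fun z => Cadd (g1 z) (g2 z)) a b c d = Cadd (Bd g1 a b c d) (Bd g2 a b c d).
Proof. intros H1 H2. unfold Bd, Hs, Vs.
  rewrite (CI_add (fun t => g1 (t, c)) (fun t => g2 (t, c))) by (apply bd_hc; auto).
  rewrite (CI_add (fun t => g1 (t, d)) (fun t => g2 (t, d))) by (apply bd_hd; auto).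
  rewrite (CI_add (fun t => g1 (a, t)) (fun t => g2 (a, t))) by (apply bd_va; auto).
  rewrite (CI_add (fun t => g1 (b, t)) (fun t => g2 (b, t))) by (apply bd_vb; auto).
  Ceq. Qed.

Lemma Bd_scal k g : bdcont g a b c d -> Bd (fun z => Cmul k (g z)) a b c d = Cmul k (Bd g a b c d).
Proof. intros H1. unfold Bd, Hs, Vs.
  rewrite (CI_scal k (fun t => g (t, c))) by (apply bd_hc; auto).
  rewrite (CI_scal k (fun t => g (t, d))) by (apply bd_hd; auto).
  rewrite (CI_scal k (fun t => g (a, t))) by (apply bd_va; auto).
  rewrite (CI_scal k (fun t => g (b, t))) by (apply bd_vb; auto).
  Ceq. Qed.

Lemma Bd_ext g1 g2 : (forall z, onBd a b c d z -> g1 z = g2 z) -> Bd g1 a b c d = Bd g2 a b c d.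
Proof. intro H. unfold Bd, Hs, Vs.
  rewrite (CI_ext (fun t => g1 (t, c)) (fun t => g2 (t, c))), (CI_ext (fun t => g1 (t, d)) (fun t => g2 (t, d))),
    (CI_ext (fun t => g1 (a, t)) (fun t => g2 (a, t))), (CI_ext (fun t => g1 (b, t)) (fun t => g2 (b, t))); auto;
  intros t Ht; apply H; unfold onBd; simpl; auto. Qed.

Lemma Bd_bound g K : bdcont g a b c d -> (forall z, onBd a b c d z -> Cmod (g z) <= K) ->
  Cmod (Bd g a b c d) <= 2 * (b - a) * K + 2 * (d - c) * K.
Proof. intros H1 H2. unfold Bd, Hs, Vs.
  assert (B1 : Cmod (CI (fun t => g (t, c)) a b) <= (b - a) * K).
  { apply CI_bound; auto. apply bd_hc; auto. intros t Ht. apply H2. left; simpl; auto. }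
  assert (B2 : Cmod (CI (fun t => g (t, d)) a b) <= (b - a) * K).
  { apply CI_bound; auto. apply bd_hd; auto. intros t Ht. apply H2. left; simpl; auto. }
  assert (B3 : Cmod (CI (fun t => g (a, t)) c d) <= (d - c) * K).
  { apply CI_bound; auto. apply bd_va; auto. intros t Ht. apply H2. right; simpl; auto. }
  assert (B4 : Cmod (CI (fun t => g (b, t)) c d) <= (d - c) * K).
  { apply CI_bound; auto. apply bd_vb; auto. intros t Ht. apply H2. right; simpl; auto. }
  assert (Ci : Cmod (0,1) = 1) by (unfold Cmod; simpl; replace (0*0+1*1) with 1 by ring; apply sqrt_1).
  eapply Rle_trans. apply Cmod_tri. apply Rplus_le_compat; (eapply Rle_trans; [apply Cmod_sub_le|]); rewrite ?Cmod_mul, ?Ci; lra. Qed.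
End BdL.

Lemma RInt_lin p q a b : RInt (fun t => p + q * t) a b = p * (b - a) + q * (b * b - a * a) / 2.
Proof. apply is_RInt_unique.
  assert (H := is_RInt_derive (V := R_CompleteNormedModule) (fun t => p * t + q * t * t / 2) (fun t => p + q * t) a b).
  replace (p * (b - a) + q * (b * b - a * a) / 2) with (minus (p * b + q * b * b / 2) (p * a + q * a * a / 2)).
  apply H. intros x _. auto_derive; auto. field. intros x _. apply (ex_derive_continuous (fun t => p + q * t)). auto_derive. auto.
  unfold minus, plus, opp; simpl. field. Qed.

Lemma CI_aff_h al be y a b : CI (fun t => Cadd al (Cmul be (t, y))) a b =
  ((fst al - snd be * y) * (b - a) + fst be * (b * b - a * a) / 2, (snd al + fst be * y) * (b - a) + snd be * (b * b - a * a) / 2).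
Proof. unfold CI. f_equal.
  - rewrite <- RInt_lin. apply RInt_ext. intros. simpl. ring.
  - rewrite <- RInt_lin. apply RInt_ext. intros. simpl. ring. Qed.
Lemma CI_aff_v al be x c d : CI (fun t => Cadd al (Cmul be (x, t))) c d =
  ((fst al + fst be * x) * (d - c) - snd be * (d * d - c * c) / 2, (snd al + snd be * x) * (d - c) + fst be * (d * d - c * c) / 2).
Proof. unfold CI. f_equal.
  - replace ((fst al + fst be * x) * (d - c) - snd be * (d * d - c * c) / 2) with ((fst al + fst be * x) * (d - c) + (- snd be) * (d * d - c * c) / 2) by field.
    rewrite <- RInt_lin. apply RInt_ext. intros. simpl. ring.
  - rewrite <- RInt_lin. apply RInt_ext. intros. simpl. ring. Qed.

Lemma Bd_affine al be a b c d : Bd (fun z => Cadd al (Cmul be z)) a b c d = C0.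
Proof. unfold Bd, Hs, Vs. rewrite !CI_aff_h, !CI_aff_v. unfold Csub, Cadd, Copp, Cmul, C0; simpl. f_equal; field. Qed.

Definition rcont g a b c d := forall z, a <= fst z <= b -> c <= snd z <= d -> Ccont g z.

Lemma Bd_subdiv g a m b c n d : a <= m <= b -> c <= n <= d -> rcont g a b c d ->
  Bd g a b c d = Cadd (Cadd (Bd g a m c n) (Bd g m b c n)) (Cadd (Bd g a m n d) (Bd g m b n d)).
Proof. intros Hm Hn H. unfold Bd.
  assert (E1 : Hs g c a b = Cadd (Hs g c a m) (Hs g c m b)).
  { unfold Hs. symmetry. apply CI_chasles; apply cint_h; try lra; intros t Ht; apply H; simpl; lra. }
  assert (E2 : Hs g d a b = Cadd (Hs g d a m) (Hs g d m b)).
  { unfold Hs. symmetry. apply CI_chasles; apply cint_h; try lra; intros t Ht; apply H; simpl; lra. }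
  assert (E3 : Vs g a c d = Cadd (Vs g a c n) (Vs g a n d)).
  { unfold Vs. rewrite <- Cmul_add_r. f_equal. symmetry. apply CI_chasles; apply cint_v; try lra; intros t Ht; apply H; simpl; lra. }
  assert (E4 : Vs g b c d = Cadd (Vs g b c n) (Vs g b n d)).
  { unfold Vs. rewrite <- Cmul_add_r. f_equal. symmetry. apply CI_chasles; apply cint_v; try lra; intros t Ht; apply H; simpl; lra. }
  rewrite E1, E2, E3, E4. unfold Csub, Cadd, Copp; simpl. f_equal; ring. Qed.

Definition Cdiff (g : Cplx -> Cplx) z := exists L, fderivC g z L.
Lemma Cdiff_cont g z : Cdiff g z -> Ccont g z.
Proof. intros [L H]. eapply fderivC_cont; eauto. Qed.
Lemma Cdiff_const a z : Cdiff (fun _ => a) z.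
Proof. eexists. apply (fderiv_const CC). Qed.
Lemma Cdiff_id z : Cdiff (fun w => w) z.
Proof. exists (fun h => h). apply (fderiv_dual CC (fun h : CC => h)). split. split; reflexivity.
  exists 1. intros; simpl; lra. Qed.
Lemma Cdiff_add f g z : Cdiff f z -> Cdiff g z -> Cdiff (fun w => Cadd (f w) (g w)) z.
Proof. intros [L1 H1] [L2 H2]. eexists. apply (fderiv_add CC); eauto. Qed.
Lemma Cdiff_mul f g z : Cdiff f z -> Cdiff g z -> Cdiff (fun w => Cmul (f w) (g w)) z.
Proof. intros [L1 H1] [L2 H2]. eexists. apply (fderiv_mul CC); eauto. Qed.
Lemma Cdiff_inv f z : f z <> C0 -> Cdiff f z -> Cdiff (fun w => Cinv (f w)) z.
Proof. intros H [L1 H1]. eexists. apply (fderiv_inv (X := CC)); eauto. Qed.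
Lemma Cdiff_scal a f z : Cdiff f z -> Cdiff (fun w => Cmul a (f w)) z.
Proof. intro. apply Cdiff_mul; auto. apply Cdiff_const. Qed.
Lemma Cdiff_sub f g z : Cdiff f z -> Cdiff g z -> Cdiff (fun w => Csub (f w) (g w)) z.
Proof. intros. replace (fun w => Csub (f w) (g w)) with (fun w => Cadd (f w) (Cmul (-1,0) (g w))).
  apply Cdiff_add; auto. apply Cdiff_scal; auto. extensionality w. Ceq. Qed.

Record rect := mkR { ra : R; rb : R; rc : R; rd : R }.

Section Goursat.
Variable g : Cplx -> Cplx.
Variables a0 b0 c0 d0 : R.
Hypothesis Hab : a0 < b0.
Hypothesis Hcd : c0 < d0.
Hypothesis HD : forall z, a0 <= fst z <= b0 -> c0 <= snd z <= d0 -> Cdiff g z.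

Definition BdR r := Bd g (ra r) (rb r) (rc r) (rd r).
Definition q1 r := mkR (ra r) ((ra r + rb r)/2) (rc r) ((rc r + rd r)/2).
Definition q2 r := mkR ((ra r + rb r)/2) (rb r) (rc r) ((rc r + rd r)/2).
Definition q3 r := mkR (ra r) ((ra r + rb r)/2) ((rc r + rd r)/2) (rd r).
Definition q4 r := mkR ((ra r + rb r)/2) (rb r) ((rc r + rd r)/2) (rd r).
Definition choose r :=
  let v := Cmod (BdR r) / 4 in
  if Rle_dec v (Cmod (BdR (q1 r))) then q1 r else
  if Rle_dec v (Cmod (BdR (q2 r))) then q2 r else
  if Rle_dec v (Cmod (BdR (q3 r))) then q3 r else q4 r.
Fixpoint sq n := match n with O => mkR a0 b0 c0 d0 | S k => choose (sq k) end.

Definition inside r := a0 <= ra r /\ ra r <= rb r /\ rb r <= b0 /\ c0 <= rc r /\ rc r <= rd r /\ rd r <= d0.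

Lemma choose_geom r : ra r <= rb r -> rc r <= rd r -> let r' := choose r in
  ra r <= ra r' /\ rb r' <= rb r /\ rc r <= rc r' /\ rd r' <= rd r /\
  rb r' - ra r' = (rb r - ra r) / 2 /\ rd r' - rc r' = (rd r - rc r) / 2.
Proof. intros H1 H2. unfold choose. simpl.
  destruct (Rle_dec _ _); [|destruct (Rle_dec _ _); [|destruct (Rle_dec _ _)]]; simpl;
  (split; [|split; [|split; [|split; [|split]]]]); lra. Qed.

Lemma choose_big r : inside r -> Cmod (BdR r) / 4 <= Cmod (BdR (choose r)).
Proof. intros [h1 [h2 [h3 [h4 [h5 h6]]]]]. unfold choose.
  destruct (Rle_dec _ _); auto. destruct (Rle_dec _ _); auto. destruct (Rle_dec _ _); auto.
  assert (E : BdR r = Cadd (Cadd (BdR (q1 r)) (BdR (q2 r))) (Cadd (BdR (q3 r)) (BdR (q4 r)))).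
  { unfold BdR, q1, q2, q3, q4; simpl. apply Bd_subdiv; try lra.
    intros z Hz1 Hz2. apply Cdiff_cont. apply HD; lra. }
  pose proof (Cmod_tri (Cadd (BdR (q1 r)) (BdR (q2 r))) (Cadd (BdR (q3 r)) (BdR (q4 r)))).
  pose proof (Cmod_tri (BdR (q1 r)) (BdR (q2 r))). pose proof (Cmod_tri (BdR (q3 r)) (BdR (q4 r))).
  rewrite <- E in H. lra. Qed.

Lemma sq_props n : inside (sq n) /\
  rb (sq n) - ra (sq n) = (b0 - a0) * (/2)^n /\ rd (sq n) - rc (sq n) = (d0 - c0) * (/2)^n /\
  Cmod (BdR (mkR a0 b0 c0 d0)) <= Cmod (BdR (sq n)) * (2^n * 2^n).
Proof. induction n as [|n IH]; simpl.
  - unfold inside; simpl. repeat split; lra.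
  - destruct IH as [[h1 [h2 [h3 [h4 [h5 h6]]]]] [W [H B]]].
    pose proof (choose_geom (sq n) h2 h5) as [g1 [g2 [g3 [g4 [g5 g6]]]]].
    pose proof (choose_big (sq n) ltac:(unfold inside; tauto)).
    assert (0 < 2^n) by (apply pow_lt; lra).
    split; [unfold inside; repeat split; lra|]. split; [rewrite g5, W; field|]. split; [rewrite g6, H; field|].
    eapply Rle_trans. apply B. nra. Qed.

Lemma sq_mono n k : ra (sq n) <= ra (sq (n + k)) /\ rb (sq (n + k)) <= rb (sq n) /\
  rc (sq n) <= rc (sq (n + k)) /\ rd (sq (n + k)) <= rd (sq n).
Proof. induction k as [|k IH]. rewrite Nat.add_0_r. lra.
  replace (n + S k)%nat with (S (n + k)) by lia. simpl.
  destruct (sq_props (n + k)) as [[h1 [h2 [h3 [h4 [h5 h6]]]]] _].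
  pose proof (choose_geom (sq (n + k)) h2 h5) as [g1 [g2 [g3 [g4 _]]]]. lra. Qed.

Lemma sq_cross n m : ra (sq n) <= rb (sq m) /\ rc (sq n) <= rd (sq m).
Proof. destruct (sq_mono n m) as [A1 [_ [A3 _]]]. destruct (sq_mono m n) as [_ [B2 [_ B4]]].
  replace (m + n)%nat with (n + m)%nat in * by lia.
  destruct (sq_props (n + m)) as [[h1 [h2 [h3 [h4 [h5 h6]]]]] _]. lra. Qed.

Theorem goursat : Bd g a0 b0 c0 d0 = C0.
Proof.
  set (Ea := fun x => exists n, x = ra (sq n)). set (Ec := fun x => exists n, x = rc (sq n)).
  destruct (completeness Ea) as [xs [Hx1 Hx2]].
  { exists b0. intros x [n ->]. destruct (sq_props n) as [[h1 [h2 [h3 _]]] _]. lra. }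
  { exists a0. exists O. reflexivity. }
  destruct (completeness Ec) as [ys [Hy1 Hy2]].
  { exists d0. intros x [n ->]. destruct (sq_props n) as [[_ [_ [_ [h4 [h5 h6]]]]] _]. lra. }
  { exists c0. exists O. reflexivity. }
  assert (Xin : forall n, ra (sq n) <= xs <= rb (sq n)).
  { intro n. split. apply Hx1. exists n; auto. apply Hx2. intros x [m ->]. apply sq_cross. }
  assert (Yin : forall n, rc (sq n) <= ys <= rd (sq n)).
  { intro n. split. apply Hy1. exists n; auto. apply Hy2. intros x [m ->]. apply sq_cross. }
  set (c := Cmod (BdR (mkR a0 b0 c0 d0))).
  destruct (Req_dec c 0) as [Ec0|Ec0]. { apply Cmod_eq0. exact Ec0. }
  assert (Hc : 0 < c) by (pose proof (Cmod_nonneg (BdR (mkR a0 b0 c0 d0))); unfold c in *; lra).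
  exfalso. set (zs := (xs, ys)). set (s0 := (b0 - a0) + (d0 - c0)).
  assert (Hs0 : 0 < s0) by (unfold s0; lra).
  destruct (HD zs) as [L HL]. { simpl. pose proof (Xin O); simpl in *; lra. } { simpl. pose proof (Yin O); simpl in *; lra. }
  set (eps := c / (4 * (s0 * s0))). assert (He : 0 < eps) by (unfold eps; apply Rdiv_lt_0_compat; nra).
  destruct (fderivC_est _ _ _ HL eps He) as [dl [Hdl E]].
  destruct (pow_lt_1_zero (/2) ltac:(rewrite Rabs_pos_eq; lra) (dl / s0) ltac:(apply Rdiv_lt_0_compat; lra)) as [N HN].
  specialize (HN N (le_n N)). rewrite Rabs_pos_eq in HN by (apply pow_le; lra).
  destruct (sq_props N) as [[h1 [h2 [h3 [h4 [h5 h6]]]]] [W [H B]]].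
  set (r := sq N) in *. set (s := s0 * (/2)^N).
  assert (Hs : s < dl). { unfold s. apply (Rmult_lt_compat_l s0) in HN; auto. replace (s0 * (dl / s0)) with dl in HN by (field; lra). lra. }
  set (be := L C1). set (al := Csub (g zs) (Cmul be zs)).
  set (e := fun z => Csub (g z) (Cadd al (Cmul be z))).
  assert (Hin : forall z, onBd (ra r) (rb r) (rc r) (rd r) z -> a0 <= fst z <= b0 /\ c0 <= snd z <= d0 /\ Cmod (Csub z zs) <= s).
  { intros z Hz. pose proof (Xin N). pose proof (Yin N). fold r in H0, H1.
    assert (ra r <= fst z <= rb r /\ rc r <= snd z <= rd r) by (destruct Hz as [[? [?|?]]|[? [?|?]]]; lra).
    split; [lra|]. split; [lra|]. eapply Rle_trans. apply Cmod_le_sum. unfold s, zs, s0; simpl.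
    replace (fst z + - xs) with (fst z - xs) by ring. replace (snd z + - ys) with (snd z - ys) by ring.
    unfold Rabs; destruct (Rcase_abs _); destruct (Rcase_abs _); nra. }
  assert (Ee : BdR r = Bd e (ra r) (rb r) (rc r) (rd r)).
  { unfold BdR. rewrite <- (Cadd_0_l (Bd e _ _ _ _)). rewrite <- (Bd_affine al be (ra r) (rb r) (rc r) (rd r)).
    rewrite <- Bd_add; try lra.
    apply Bd_ext; try lra. intros z _. unfold e. Ceq.
    intros z Hz. apply Cdiff_cont. apply Cdiff_add. apply Cdiff_const. apply Cdiff_scal. apply Cdiff_id.
    intros z Hz. apply Cdiff_cont. unfold e. apply Cdiff_sub. apply HD; apply Hin; auto.
    apply Cdiff_add. apply Cdiff_const. apply Cdiff_scal. apply Cdiff_id. }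
  assert (Be : Cmod (BdR r) <= 2 * (rb r - ra r) * (eps * s) + 2 * (rd r - rc r) * (eps * s)).
  { rewrite Ee. apply Bd_bound; try lra.
    intros z Hz. apply Cdiff_cont. unfold e. apply Cdiff_sub. apply HD; apply Hin; auto.
    apply Cdiff_add. apply Cdiff_const. apply Cdiff_scal. apply Cdiff_id.
    intros z Hz. destruct (Hin z Hz) as [_ [_ Hz']]. specialize (E z ltac:(lra)).
    unfold e. replace (Csub (g z) (Cadd al (Cmul be z))) with (Csub (Csub (g z) (g zs)) (Cmul (L C1) (Csub z zs))) by (unfold al, be; Ceq).
    eapply Rle_trans. apply E. apply Rmult_le_compat_l; lra. }
  rewrite W, H in Be. fold r in B.
  assert (0 < 2^N) by (apply pow_lt; lra).
  assert (I2 : (/2)^N * 2^N = 1) by (rewrite <- Rpow_mult_distr; replace (/2*2) with 1 by field; apply pow1).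
  assert (Cmod (BdR r) * (2^N * 2^N) <= c / 2).
  { apply Rle_trans with ((2 * ((b0 - a0) * (/ 2) ^ N) * (eps * s) + 2 * ((d0 - c0) * (/ 2) ^ N) * (eps * s)) * (2^N * 2^N)).
    apply Rmult_le_compat_r; [nra|auto].
    unfold s, eps. replace ((2 * ((b0 - a0) * (/ 2) ^ N) * (c / (4 * (s0 * s0)) * (s0 * (/ 2) ^ N)) +
      2 * ((d0 - c0) * (/ 2) ^ N) * (c / (4 * (s0 * s0)) * (s0 * (/ 2) ^ N))) * (2 ^ N * 2 ^ N))
      with ((2 * (b0 - a0) + 2 * (d0 - c0)) * (c / (4 * (s0 * s0)) * s0) * (((/2)^N * 2^N) * ((/2)^N * 2^N))) by ring.
    rewrite I2. unfold s0. right. field. unfold s0 in Hs0. lra. }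
  fold c in B. lra. Qed.
End Goursat.

Lemma RInt_lo f a b lo : a <= b -> ex_RInt f a b -> (forall t, a < t < b -> lo <= f t) -> lo * (b - a) <= RInt f a b.
Proof. intros H1 H2 H3. rewrite Rmult_comm, <- RInt_R_const. apply RInt_le; auto. apply ex_RInt_const. Qed.
Lemma RInt_hi f a b hi : a <= b -> ex_RInt f a b -> (forall t, a < t < b -> f t <= hi) -> RInt f a b <= hi * (b - a).
Proof. intros H1 H2 H3. rewrite Rmult_comm, <- RInt_R_const. apply RInt_le; auto. apply ex_RInt_const. Qed.

Lemma nz_of_fst z : fst z <> 0 -> z <> C0.
Proof. intros H E. subst. apply H. reflexivity. Qed.
Lemma nz_of_snd z : snd z <> 0 -> z <> C0.
Proof. intros H E. subst. apply H. reflexivity. Qed.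

Lemma Cdiff_Cinv z : z <> C0 -> Cdiff Cinv z.
Proof. intro H. apply (Cdiff_inv (fun w => w)); auto. apply Cdiff_id. Qed.

Lemma Bd_inv_im : 4 <= snd (Bd Cinv (-1) 1 (-1) 1).
Proof.
  assert (Hc : forall z, z <> C0 -> Ccont Cinv z) by (intros; apply Cdiff_cont, Cdiff_Cinv; auto).
  assert (I1 : cint (fun t => Cinv (t, -1)) (-1) 1).
  { apply cint_h. lra. intros. apply Hc, nz_of_snd. simpl; lra. }
  assert (I2 : cint (fun t => Cinv (t, 1)) (-1) 1).
  { apply cint_h. lra. intros. apply Hc, nz_of_snd. simpl; lra. }
  assert (I3 : cint (fun t => Cinv (1, t)) (-1) 1).
  { apply cint_v. lra. intros. apply Hc, nz_of_fst. simpl; lra. }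
  assert (I4 : cint (fun t => Cinv (-1, t)) (-1) 1).
  { apply cint_v. lra. intros. apply Hc, nz_of_fst. simpl; lra. }
  destruct I1 as [_ J1]. destruct I2 as [_ J2]. destruct I3 as [J3 _]. destruct I4 as [J4 _].
  unfold Bd, Hs, Vs, CI, Csub, Cadd, Copp, Cmul. simpl.
  assert (1 <= RInt (fun t => snd (Cinv (t, -1))) (-1) 1).
  { apply Rle_trans with (/2 * (1 - -1)). lra. apply RInt_lo; auto. lra. intros t Ht. unfold Cinv; simpl.
    apply Rmult_le_reg_r with (t * t + -1 * -1). nra. field_simplify; nra. }
  assert (RInt (fun t => snd (Cinv (t, 1))) (-1) 1 <= -1).
  { apply Rle_trans with (-/2 * (1 - -1)). 2: lra. apply RInt_hi; auto. lra. intros t Ht. unfold Cinv; simpl.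
    apply Rmult_le_reg_r with (t * t + 1 * 1). nra. field_simplify; nra. }
  assert (1 <= RInt (fun t => fst (Cinv (1, t))) (-1) 1).
  { apply Rle_trans with (/2 * (1 - -1)). lra. apply RInt_lo; auto. lra. intros t Ht. unfold Cinv; simpl.
    apply Rmult_le_reg_r with (1 * 1 + t * t). nra. field_simplify; nra. }
  assert (RInt (fun t => fst (Cinv (-1, t))) (-1) 1 <= -1).
  { apply Rle_trans with (-/2 * (1 - -1)). 2: lra. apply RInt_hi; auto. lra. intros t Ht. unfold Cinv; simpl.
    apply Rmult_le_reg_r with (-1 * -1 + t * t). nra. field_simplify; nra. }
  unfold Cinv in *. simpl in *. lra. Qed.

Lemma annulus g e : 0 < e < 1 ->
  (forall z, z <> C0 -> -1 <= fst z <= 1 -> -1 <= snd z <= 1 -> Cdiff g z) ->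
  Bd g (-1) 1 (-1) 1 = Bd g (-e) e (-e) e.
Proof. intros He HD.
  assert (Gb : Bd g (-1) 1 (-1) (-e) = C0).
  { apply goursat; try lra. intros z H1 H2. apply HD; try lra. apply nz_of_snd; lra. }
  assert (Gt : Bd g (-1) 1 e 1 = C0).
  { apply goursat; try lra. intros z H1 H2. apply HD; try lra. apply nz_of_snd; lra. }
  assert (Gl : Bd g (-1) (-e) (-e) e = C0).
  { apply goursat; try lra. intros z H1 H2. apply HD; try lra. apply nz_of_fst; lra. }
  assert (Gr : Bd g e 1 (-e) e = C0).
  { apply goursat; try lra. intros z H1 H2. apply HD; try lra. apply nz_of_fst; lra. }
  assert (Ch : forall y, y <> 0 -> -1 <= y <= 1 -> Hs g y (-1) 1 = Cadd (Cadd (Hs g y (-1) (-e)) (Hs g y (-e) e)) (Hs g y e 1)).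
  { intros y Hy Hy'. unfold Hs.
    assert (forall a b, -1 <= a <= b -> b <= 1 -> cint (fun t => g (t, y)) a b).
    { intros a b Ha Hb. apply cint_h. lra. intros t Ht. apply Cdiff_cont, HD; simpl; try lra. apply nz_of_snd; auto. }
    rewrite !CI_chasles; auto; apply H; lra. }
  assert (Cv : forall x, x <> 0 -> -1 <= x <= 1 -> Vs g x (-1) 1 = Cadd (Cadd (Vs g x (-1) (-e)) (Vs g x (-e) e)) (Vs g x e 1)).
  { intros x Hx Hx'. unfold Vs. rewrite <- !Cmul_add_r. f_equal.
    assert (forall a b, -1 <= a <= b -> b <= 1 -> cint (fun t => g (x, t)) a b).
    { intros a b Ha Hb. apply cint_v. lra. intros t Ht. apply Cdiff_cont, HD; simpl; try lra. apply nz_of_fst; auto. }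
    rewrite !CI_chasles; auto; apply H; lra. }
  transitivity (Cadd (Bd g (-e) e (-e) e) (Cadd (Cadd (Bd g (-1) 1 (-1) (-e)) (Bd g (-1) 1 e 1)) (Cadd (Bd g (-1) (-e) (-e) e) (Bd g e 1 (-e) e)))).
  2:{ rewrite Gb, Gt, Gl, Gr. Ceq. }
  unfold Bd. rewrite (Ch (-e)), (Ch e), (Cv 1), (Cv (-1)); try lra.
  unfold Csub, Cadd, Copp. apply injective_projections; simpl; ring. Qed.

Lemma Cmod_ge_coord z r : 0 <= r -> (Rabs (fst z) = r \/ Rabs (snd z) = r) -> r <= Cmod z.
Proof. intros Hr [H|H]; rewrite <- H; [apply Cmod_fst|apply Cmod_snd]. Qed.

Lemma onBd_sq e z : 0 < e -> onBd (-e) e (-e) e z -> z <> C0 /\ e <= Cmod z /\ Cmod z <= 2 * e.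
Proof. intros He Hz.
  assert (Rabs (fst z) = e \/ Rabs (snd z) = e).
  { destruct Hz as [[H1 [H2|H2]]|[H1 [H2|H2]]]; rewrite H2; [right|right|left|left];
    first [rewrite Rabs_Ropp| idtac]; apply Rabs_pos_eq; lra. }
  assert (Rabs (fst z) <= e /\ Rabs (snd z) <= e).
  { destruct Hz as [[H1 [H2|H2]]|[H1 [H2|H2]]]; rewrite ?H2; split; unfold Rabs; destruct (Rcase_abs _); lra. }
  pose proof (Cmod_ge_coord z e ltac:(lra) H). split. intro E; subst. rewrite Cmod_C0 in H1. lra.
  split; auto. eapply Rle_trans. apply Cmod_le_sum. lra. Qed.

Theorem cauchy_est g M L0 :
  (forall z, -1 <= fst z <= 1 -> -1 <= snd z <= 1 -> Cdiff g z) ->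
  (forall z, -1 <= fst z <= 1 -> -1 <= snd z <= 1 -> Cmod (g z) <= M) ->
  fderivC g C0 L0 -> Cmod (L0 C1) <= 4 * M.
Proof. intros HD HM HL.
  set (d0 := L0 C1). set (g0 := g C0).
  set (I2 := fun z => Cmul (Cinv z) (Cinv z)).
  set (K := fun z => Cmul (Csub (Csub (g z) g0) (Cmul d0 z)) (I2 z)).
  assert (HM0 : 0 <= M) by (pose proof (HM C0 ltac:(simpl; lra) ltac:(simpl; lra)); pose proof (Cmod_nonneg (g C0)); lra).
  assert (DI2 : forall z, z <> C0 -> Cdiff I2 z) by (intros; apply Cdiff_mul; apply Cdiff_Cinv; auto).
  assert (DK : forall z, z <> C0 -> -1 <= fst z <= 1 -> -1 <= snd z <= 1 -> Cdiff K z).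
  { intros z Hz H1 H2. apply Cdiff_mul; auto. apply Cdiff_sub. apply Cdiff_sub. apply HD; auto. apply Cdiff_const.
    apply Cdiff_scal. apply Cdiff_id. }
  assert (BK : Bd K (-1) 1 (-1) 1 = C0).
  { apply Cmod_eq0. apply Rle_antisym; [|apply Cmod_nonneg].
    apply Rnot_lt_le. intro Hpos. set (eta := Cmod (Bd K (-1) 1 (-1) 1) / 16).
    assert (Heta : 0 < eta) by (unfold eta; lra).
    destruct (fderivC_est _ _ _ HL eta Heta) as [dl [Hdl E]].
    set (e := Rmin (dl / 4) (1/2)). assert (He : 0 < e) by (unfold e; apply Rmin_glb_lt; lra).
    assert (He1 : e < 1) by (unfold e; pose proof (Rmin_r (dl/4) (1/2)); lra).
    assert (He2 : 2 * e < dl) by (unfold e; pose proof (Rmin_l (dl/4) (1/2)); lra).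
    assert (Ea : Bd K (-1) 1 (-1) 1 = Bd K (-e) e (-e) e) by (apply annulus; [lra| intros; apply DK; auto]).
    assert (Cmod (Bd K (-e) e (-e) e) <= 2 * (e - - e) * (eta / e) + 2 * (e - - e) * (eta / e)).
    { apply Bd_bound; try lra.
      - intros z Hz. destruct (onBd_sq e z He Hz) as [Hz0 _]. apply Cdiff_cont. apply DK; auto.
        destruct Hz as [[? [?|?]]|[? [?|?]]]; rewrite ?H0; lra.
        destruct Hz as [[? [?|?]]|[? [?|?]]]; rewrite ?H0; lra.
      - intros z Hz. destruct (onBd_sq e z He Hz) as [Hz0 [Hz1 Hz2]]. unfold K, I2.
        rewrite !Cmod_mul, !Cmod_inv by auto.
        specialize (E z). replace (Csub z C0) with z in E by Ceq. specialize (E ltac:(lra)).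
        fold d0 g0 in E.
        apply Rle_trans with (eta * Cmod z * (/ Cmod z * / Cmod z)).
        apply Rmult_le_compat_r; auto. left. apply Rmult_lt_0_compat; apply Rinv_0_lt_compat; lra.
        replace (eta * Cmod z * (/ Cmod z * / Cmod z)) with (eta / Cmod z) by (field; lra).
        unfold Rdiv. apply Rmult_le_compat_l; [lra|]. apply Rinv_le_contravar; lra. }
    replace (2 * (e - - e) * (eta / e) + 2 * (e - - e) * (eta / e)) with (8 * eta) in H by (field; lra).
    rewrite <- Ea in H. unfold eta in H. lra. }
  assert (On1 : forall z, onBd (-1) 1 (-1) 1 z -> z <> C0 /\ 1 <= Cmod z /\ -1 <= fst z <= 1 /\ -1 <= snd z <= 1).
  { intros z Hz. destruct (onBd_sq 1 z ltac:(lra) Hz) as [A [B _]]. split; auto. split; auto.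
    destruct Hz as [[? [?|?]]|[? [?|?]]]; rewrite ?H0; lra. }
  assert (Dec : Bd (fun z => Cmul (g z) (I2 z)) (-1) 1 (-1) 1 =
     Cadd (Bd K (-1) 1 (-1) 1) (Cadd (Cmul g0 (Bd I2 (-1) 1 (-1) 1)) (Cmul d0 (Bd Cinv (-1) 1 (-1) 1)))).
  { assert (BC : forall h, (forall z, z <> C0 -> -1 <= fst z <= 1 -> -1 <= snd z <= 1 -> Cdiff h z) -> bdcont h (-1) 1 (-1) 1).
    { intros h Hh z Hz. destruct (On1 z Hz) as [? [? [? ?]]]. apply Cdiff_cont, Hh; auto. }
    assert (C2 : bdcont I2 (-1) 1 (-1) 1) by (apply BC; intros; apply DI2; auto).
    assert (C3 : bdcont Cinv (-1) 1 (-1) 1) by (apply BC; intros; apply Cdiff_Cinv; auto).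
    assert (CK : bdcont K (-1) 1 (-1) 1) by (apply BC; intros; apply DK; auto).
    assert (E1 := Bd_scal (-1) 1 (-1) 1 ltac:(lra) ltac:(lra) g0 I2 C2).
    assert (E2 := Bd_scal (-1) 1 (-1) 1 ltac:(lra) ltac:(lra) d0 Cinv C3).
    assert (C4 : bdcont (fun z => Cmul g0 (I2 z)) (-1) 1 (-1) 1) by (apply BC; intros; apply Cdiff_scal, DI2; auto).
    assert (C5 : bdcont (fun z => Cmul d0 (Cinv z)) (-1) 1 (-1) 1) by (apply BC; intros; apply Cdiff_scal, Cdiff_Cinv; auto).
    assert (E3 := Bd_add (-1) 1 (-1) 1 ltac:(lra) ltac:(lra) _ _ C4 C5).
    assert (C6 : bdcont (fun z => Cadd (Cmul g0 (I2 z)) (Cmul d0 (Cinv z))) (-1) 1 (-1) 1).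
    { apply BC; intros. apply Cdiff_add; apply Cdiff_scal; [apply DI2|apply Cdiff_Cinv]; auto. }
    assert (E4 := Bd_add (-1) 1 (-1) 1 ltac:(lra) ltac:(lra) _ _ CK C6). cbv beta in E3, E4.
    rewrite E3, E1, E2 in E4. rewrite <- E4.
    apply Bd_ext; try lra. intros z Hz. destruct (On1 z Hz) as [Hz0 _].
    unfold K, I2. pose proof (Cnorm2_pos z Hz0). destruct z as [x y]. simpl in H.
    destruct (g (x,y)) as [u v]. unfold Csub, Cadd, Copp, Cmul, Cinv; simpl. apply injective_projections; simpl; field; lra. }
  rewrite BK, Cadd_0_l in Dec.
  assert (B1 : Cmod (Bd (fun z => Cmul (g z) (I2 z)) (-1) 1 (-1) 1) <= 8 * M).
  { replace (8 * M) with (2 * (1 - -1) * M + 2 * (1 - -1) * M) by ring. apply Bd_bound; try lra.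
    intros z Hz. destruct (On1 z Hz) as [? [? [? ?]]]. apply Cdiff_cont. apply Cdiff_mul; auto.
    intros z Hz. destruct (On1 z Hz) as [? [? [? ?]]]. unfold I2. rewrite !Cmod_mul, !Cmod_inv by auto.
    specialize (HM z H1 H2). apply Rle_trans with (M * 1). apply Rmult_le_compat; auto using Cmod_nonneg.
    apply Rmult_le_pos; left; apply Rinv_0_lt_compat; lra.
    rewrite <- (Rmult_1_r 1). apply Rmult_le_compat; try (left; apply Rinv_0_lt_compat; lra);
    rewrite <- Rinv_1; apply Rinv_le_contravar; lra. lra. }
  assert (B2 : Cmod (Bd I2 (-1) 1 (-1) 1) <= 8).
  { replace 8 with (2 * (1 - -1) * 1 + 2 * (1 - -1) * 1) by ring. apply Bd_bound; try lra.
    intros z Hz. destruct (On1 z Hz) as [? [? [? ?]]]. apply Cdiff_cont. apply DI2; auto.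
    intros z Hz. destruct (On1 z Hz) as [? [? [? ?]]]. unfold I2. rewrite !Cmod_mul, !Cmod_inv by auto.
    rewrite <- (Rmult_1_r 1). apply Rmult_le_compat; try (left; apply Rinv_0_lt_compat; lra);
    rewrite <- Rinv_1; apply Rinv_le_contravar; lra. }
  assert (B3 : 4 <= Cmod (Bd Cinv (-1) 1 (-1) 1)).
  { pose proof Bd_inv_im. pose proof (Cmod_snd (Bd Cinv (-1) 1 (-1) 1)). pose proof (Rle_abs (snd (Bd Cinv (-1) 1 (-1) 1))). lra. }
  assert (Hg0 : Cmod g0 <= M) by (apply HM; simpl; lra).
  assert (Cmod (Cmul d0 (Bd Cinv (-1) 1 (-1) 1)) <= 16 * M).
  { replace (Cmul d0 (Bd Cinv (-1) 1 (-1) 1)) with (Csub (Bd (fun z => Cmul (g z) (I2 z)) (-1) 1 (-1) 1) (Cmul g0 (Bd I2 (-1) 1 (-1) 1))) by (rewrite Dec; Ceq).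
    eapply Rle_trans. apply Cmod_sub_le. rewrite Cmod_mul.
    assert (Cmod g0 * Cmod (Bd I2 (-1) 1 (-1) 1) <= M * 8) by (apply Rmult_le_compat; auto using Cmod_nonneg). lra. }
  rewrite Cmod_mul in H. fold d0. pose proof (Cmod_nonneg d0). nra. Qed.

Lemma fderiv_ext {X : CBanach} (f : X -> Cplx) x L L' : fderiv f x L -> (forall h, L h = L' h) -> fderiv f x L'.
Proof. intros H E. replace L' with L; auto. extensionality h; auto. Qed.

Lemma fderiv_sub {X : CBanach} (f g : X -> Cplx) x L1 L2 : fderiv f x L1 -> fderiv g x L2 ->
  fderiv (fun y => Csub (f y) (g y)) x (fun h => Csub (L1 h) (L2 h)).
Proof. intros H1 H2.
  assert (H3 := fderiv_mul X (fun _ => (-1,0)) g x (fun _ => C0) L2 (fderiv_const X _ x) H2).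
  assert (H4 := fderiv_add X f _ x _ _ H1 H3). cbv beta in H4.
  replace (fun y => Csub (f y) (g y)) with (fun y => Cadd (f y) (Cmul (-1, 0) (g y))) by (extensionality y; Ceq).
  eapply fderiv_ext. apply H4. intro h. Ceq. Qed.

Section Slice.
Variable X : CBanach.

Lemma slice f (y w : X) l0 L : fderiv f (vadd y (vscal l0 w)) L ->
  fderivC (fun l => f (vadd y (vscal l w))) l0 (fun m => L (vscal m w)).
Proof. intros [HL D]. destruct (dual_bound _ HL) as [M [HM BM]]. pose proof HL as [[A S] _].
  split.
  - split; [split|].
    + intros a b. simpl. rewrite vscal_distr_c, A. reflexivity.
    + intros a b. simpl. rewrite <- vscal_assoc, S. reflexivity.
    + exists (M * vnorm w). intro m. simpl. eapply Rle_trans. apply BM. rewrite vnorm_scal. right; ring.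
  - intros eps He. set (c := vnorm w + 1). assert (Hc : 0 < c) by (unfold c; pose proof (vnorm_nonneg w); lra).
    destruct (D (eps / c)) as [d [Hd E]]. apply Rdiv_lt_0_compat; lra.
    exists (d / c). split. apply Rdiv_lt_0_compat; lra. intros m Hm. simpl in Hm |- *.
    assert (vnorm (vscal m w) < d).
    { rewrite vnorm_scal. apply Rle_lt_trans with (Cmod m * c). apply Rmult_le_compat_l. apply Cmod_nonneg. unfold c; lra.
      apply (Rmult_lt_compat_r c) in Hm; auto. replace (d / c * c) with d in Hm by (field; lra). lra. }
    specialize (E _ H). rewrite <- vadd_assoc, <- vscal_distr_c in E. eapply Rle_trans. apply E.
    rewrite vnorm_scal. replace (eps / c * (Cmod m * vnorm w)) with (eps * Cmod m * (vnorm w / c)) by (field; lra).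
    rewrite <- (Rmult_1_r (eps * Cmod m)) at 2. apply Rmult_le_compat_l.
    apply Rmult_le_pos; [lra| apply Cmod_nonneg]. apply Rmult_le_reg_r with c; auto. unfold Rdiv. rewrite Rmult_assoc, Rinv_l by lra. unfold c; lra. Qed.

Lemma deriv_diff f R1 : holomorphic_on_B f -> unif_cont_on_B f -> 0 <= R1 < 1 ->
  forall eps, 0 < eps -> exists d1, 0 < d1 /\ forall (p p' u : X) Lp Lp',
    vnorm p <= R1 + (1 - R1)/4 -> vnorm p' <= R1 + (1 - R1)/4 -> vnorm (vsub p p') < d1 ->
    fderiv f p Lp -> fderiv f p' Lp' -> Cmod (Csub (Lp u) (Lp' u)) <= eps * vnorm u.
Proof. intros Hf Uf HR eps He. set (d0 := (1 - R1)/4). assert (Hd0 : 0 < d0) by (unfold d0; lra).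
  destruct (Uf (eps * d0 / 4)) as [d1 [Hd1 U]]. apply Rdiv_lt_0_compat; [nra|lra].
  exists d1. split; auto. intros p p' u Lp Lp' Hp Hp' Hpp FLp FLp'.
  destruct (Req_dec (vnorm u) 0) as [Hu|Hu].
  { apply vnorm_eq0 in Hu. subst. destruct FLp as [[Lp1 _] _]. destruct FLp' as [[Lp1' _] _].
    rewrite (dual_zero _ Lp1), (dual_zero _ Lp1'), Csub_diag, Cmod_C0, vnorm_zero. lra. }
  assert (Hu' : 0 < vnorm u) by (pose proof (vnorm_nonneg u); lra).
  set (w := vscal (d0 / vnorm u, 0) u).
  assert (Hw : vnorm w = d0) by (unfold w; rewrite vnorm_real_scal, Rabs_pos_eq; [field; lra| apply Rlt_le, Rdiv_lt_0_compat; lra]).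
  set (g := fun l => Csub (f (vadd p (vscal l w))) (f (vadd p' (vscal l w)))).
  assert (Hin : forall (q : X) l, vnorm q <= R1 + d0 -> Rabs (fst l) <= 1 -> Rabs (snd l) <= 1 -> inB (vadd q (vscal l w))).
  { intros q l Hq H1 H2. unfold inB. eapply Rle_lt_trans. apply vnorm_triangle. rewrite vnorm_scal, Hw.
    pose proof (Cmod_le_sum l). unfold d0 in *. nra. }
  assert (HD : forall l, -1 <= fst l <= 1 -> -1 <= snd l <= 1 -> Cdiff g l).
  { intros l H1 H2. apply holo_iff in Hf.
    destruct (Hf (vadd p (vscal l w))) as [L1 HL1]. apply Hin; auto. unfold Rabs; destruct (Rcase_abs _); lra. unfold Rabs; destruct (Rcase_abs _); lra.
    destruct (Hf (vadd p' (vscal l w))) as [L2 HL2]. apply Hin; auto. unfold Rabs; destruct (Rcase_abs _); lra. unfold Rabs; destruct (Rcase_abs _); lra.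
    eexists. apply (fderiv_sub (X := CC)); apply slice; eauto. }
  assert (HM : forall l, -1 <= fst l <= 1 -> -1 <= snd l <= 1 -> Cmod (g l) <= eps * d0 / 4).
  { intros l H1 H2. left. apply U.
    apply Hin; auto. unfold Rabs; destruct (Rcase_abs _); lra. unfold Rabs; destruct (Rcase_abs _); lra.
    apply Hin; auto. unfold Rabs; destruct (Rcase_abs _); lra. unfold Rabs; destruct (Rcase_abs _); lra.
    rewrite vsub_add_r. auto. }
  assert (H0 : fderivC g C0 (fun m => Csub (Lp (vscal m w)) (Lp' (vscal m w)))).
  { apply (fderiv_sub (X := CC)); apply slice; rewrite vscal_C0, vadd_0; auto. }
  pose proof (cauchy_est g _ _ HD HM H0) as CE. simpl in CE. rewrite (vscal_1 w) in CE.
  assert (Lu : forall L : X -> Cplx, in_dual L -> L u = Cmul (vnorm u / d0, 0) (L w)).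
  { intros L [[_ S] _]. unfold w. rewrite S, Cmul_assoc. replace (Cmul (vnorm u / d0, 0) (d0 / vnorm u, 0)) with C1.
    rewrite Cmul_1_l; auto. unfold Cmul, C1; simpl. apply injective_projections; simpl; field; lra. }
  destruct FLp as [HLp _]. destruct FLp' as [HLp' _].
  rewrite (Lu Lp HLp), (Lu Lp' HLp'). replace (Csub (Cmul (vnorm u / d0, 0) (Lp w)) (Cmul (vnorm u / d0, 0) (Lp' w))) with (Cmul (vnorm u / d0, 0) (Csub (Lp w) (Lp' w))) by Ceq.
  rewrite Cmod_mul, Cmod_real, Rabs_pos_eq by (apply Rlt_le, Rdiv_lt_0_compat; lra).
  apply Rle_trans with (vnorm u / d0 * (4 * (eps * d0 / 4))). apply Rmult_le_compat_l; auto. apply Rlt_le, Rdiv_lt_0_compat; lra.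
  right. field. lra. Qed.
End Slice.

Definition Rderiv (phi : R -> Cplx) t d := forall eps, 0 < eps -> exists delta, 0 < delta /\
  forall s, Rabs s < delta -> Cmod (Csub (Csub (phi (t + s)) (phi t)) (Cmul (s, 0) d)) <= eps * Rabs s.

Lemma MVI phi K : (forall t, 0 <= t <= 1 -> exists d, Rderiv phi t d /\ Cmod d <= K) ->
  Cmod (Csub (phi 1) (phi 0)) <= K.
Proof. intro H. set (A := Csub (phi 1) (phi 0)).
  assert (HK : 0 <= K) by (destruct (H 0 ltac:(lra)) as [d [_ Hd]]; pose proof (Cmod_nonneg d); lra).
  destruct (Req_dec (Cmod A) 0) as [E|E]. rewrite E; auto.
  assert (HA : 0 < Cmod A) by (pose proof (Cmod_nonneg A); lra).
  set (D := fun t => epsilon (inhabits C0) (fun d => Rderiv phi t d /\ Cmod d <= K)).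
  assert (HD : forall t, 0 <= t <= 1 -> Rderiv phi t (D t) /\ Cmod (D t) <= K).
  { intros t Ht. unfold D. apply epsilon_spec. apply H; auto. }
  set (psi := fun t => fst A * fst (phi t) + snd A * snd (phi t)).
  set (psi' := fun t => fst A * fst (D t) + snd A * snd (D t)).
  destruct (MVT.MVT_cor2 psi psi' 0 1 ltac:(lra)) as [c [Hc1 Hc2]].
  { intros c Hc. destruct (HD c Hc) as [Hd _]. intros eps He.
    destruct (Hd (eps / (2 * (Cmod A + 1)))) as [del [Hdel Ed]]. apply Rdiv_lt_0_compat; lra.
    exists (mkposreal del Hdel). intros s Hs0 Hs. simpl in Hs. specialize (Ed s Hs).
    set (v := Csub (Csub (phi (c + s)) (phi c)) (Cmul (s, 0) (D c))) in *.
    assert (Ev : (psi (c + s) - psi c) / s - psi' c = (fst A * fst v + snd A * snd v) / s).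
    { unfold psi, psi', v. unfold Csub, Cadd, Copp, Cmul; simpl. field. auto. }
    rewrite Ev. unfold Rdiv. rewrite Rabs_mult, Rabs_inv.
    assert (Rabs (fst A * fst v + snd A * snd v) <= Cmod A * Cmod v).
    { unfold Rabs at 1. destruct (Rcase_abs _). 
      pose proof (dot_le (Copp A) v). rewrite Cmod_opp in H0. assert (fst (Copp A) = - fst A /\ snd (Copp A) = - snd A) as [E1 E2] by (split; reflexivity). rewrite E1, E2 in H0. eapply Rle_trans; [|exact H0]. right; ring.
      apply dot_le. }
    assert (0 < Rabs s) by (apply Rabs_pos_lt; auto).
    apply Rle_lt_trans with (Cmod A * (eps / (2 * (Cmod A + 1)) * Rabs s) * / Rabs s).
    apply Rmult_le_compat_r. left; apply Rinv_0_lt_compat; auto.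
    eapply Rle_trans. apply H0. apply Rmult_le_compat_l; auto. apply Cmod_nonneg.
    replace (Cmod A * (eps / (2 * (Cmod A + 1)) * Rabs s) * / Rabs s) with (eps * (Cmod A / (2 * (Cmod A + 1)))) by (field; lra).
    assert (Cmod A / (2 * (Cmod A + 1)) < 1). { apply Rmult_lt_reg_r with (2 * (Cmod A + 1)). lra. unfold Rdiv. rewrite Rmult_assoc, Rinv_l by lra. lra. }
    rewrite <- (Rmult_1_r eps) at 2. apply Rmult_lt_compat_l; auto. }
  assert (E1 : psi 1 - psi 0 = Cmod A * Cmod A).
  { unfold psi. unfold Cmod. rewrite sqrt_sqrt. unfold A, Csub, Cadd, Copp; simpl. ring.
    pose proof (Rle_0_sqr (fst A)); pose proof (Rle_0_sqr (snd A)); unfold Rsqr in *; lra. }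
  destruct (HD c ltac:(lra)) as [_ Hdc].
  assert (psi' c <= Cmod A * K) by (unfold psi'; eapply Rle_trans; [apply dot_le| apply Rmult_le_compat_l; auto; apply Cmod_nonneg]).
  rewrite E1 in Hc1. nra. Qed.

Theorem unif_frechet {X : CBanach} (f : X -> Cplx) R1 : holomorphic_on_B f -> unif_cont_on_B f -> 0 <= R1 < 1 ->
  forall eps, 0 < eps -> exists eta, 0 < eta /\ forall y L h, vnorm y <= R1 -> fderiv f y L -> vnorm h < eta ->
    Cmod (Csub (Csub (f (vadd y h)) (f y)) (L h)) <= eps * vnorm h.
Proof. intros Hf Uf HR eps He. set (d0 := (1 - R1)/4). assert (Hd0 : 0 < d0) by (unfold d0; lra).
  destruct (deriv_diff X f R1 Hf Uf HR eps He) as [d1 [Hd1 DD]]. fold d0 in DD.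
  exists (Rmin d0 d1). split. apply Rmin_glb_lt; auto. intros y L h Hy FL Hh.
  assert (h0 : vnorm h < d0) by (eapply Rlt_le_trans; [apply Hh| apply Rmin_l]).
  assert (h1 : vnorm h < d1) by (eapply Rlt_le_trans; [apply Hh| apply Rmin_r]).
  set (p := fun t : R => vadd y (vscal (t, 0) h)).
  set (phi := fun t => Csub (f (p t)) (Cmul (t, 0) (L h))).
  assert (Hp : forall t, 0 <= t <= 1 -> vnorm (p t) <= R1 + d0 /\ vnorm (vsub (p t) y) <= vnorm h).
  { intros t Ht. unfold p. split.
    eapply Rle_trans. apply vnorm_triangle. rewrite vnorm_real_scal, Rabs_pos_eq by lra. pose proof (vnorm_nonneg h). nra.
    rewrite vsub_add. rewrite vnorm_real_scal, Rabs_pos_eq by lra. pose proof (vnorm_nonneg h). nra. }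
  assert (M := MVI phi (eps * vnorm h)).
  replace (Csub (phi 1) (phi 0)) with (Csub (Csub (f (vadd y h)) (f y)) (L h)) in M.
  2:{ unfold phi, p. change (1, 0) with C1. change (0,0) with C0. rewrite vscal_1, vscal_C0, vadd_0. Ceq. }
  apply M. intros t Ht. destruct (Hp t Ht) as [Hp1 Hp2].
  apply holo_iff in Hf. destruct (Hf (p t)) as [Lt FLt]. unfold inB. unfold d0 in Hp1; lra.
  exists (Csub (Lt h) (L h)). split.
  - intros e' He'. destruct FLt as [HLt D]. set (c := vnorm h + 1). assert (Hc : 0 < c) by (unfold c; pose proof (vnorm_nonneg h); lra).
    destruct (D (e' / c)) as [del [Hdel E]]. apply Rdiv_lt_0_compat; lra.
    exists (del / c). split. apply Rdiv_lt_0_compat; lra. intros s Hs.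
    assert (vnorm (vscal (s, 0) h) < del).
    { rewrite vnorm_real_scal. apply Rle_lt_trans with (Rabs s * c). apply Rmult_le_compat_l. apply Rabs_pos. unfold c; lra.
      apply (Rmult_lt_compat_r c) in Hs; auto. replace (del / c * c) with del in Hs by (field; lra). lra. }
    specialize (E _ H). unfold phi.
    replace (p (t + s)) with (vadd (p t) (vscal (s, 0) h)).
    2:{ unfold p. replace (t + s, 0) with (Cadd (t,0) (s,0)) by Ceq. rewrite <- vadd_assoc, <- vscal_distr_c. reflexivity. }
    destruct HLt as [[_ St] _]. rewrite St in E.
    replace (Csub (Csub (Csub (f (vadd (p t) (vscal (s, 0) h))) (Cmul (t + s, 0) (L h))) (Csub (f (p t)) (Cmul (t, 0) (L h))))
       (Cmul (s, 0) (Csub (Lt h) (L h)))) with (Csub (Csub (f (vadd (p t) (vscal (s, 0) h))) (f (p t))) (Cmul (s, 0) (Lt h))) by Ceq.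
    eapply Rle_trans. apply E. rewrite vnorm_real_scal.
    replace (e' / c * (Rabs s * vnorm h)) with (e' * Rabs s * (vnorm h / c)) by (field; lra).
    rewrite <- (Rmult_1_r (e' * Rabs s)) at 2. apply Rmult_le_compat_l. apply Rmult_le_pos; [lra|apply Rabs_pos].
    apply Rmult_le_reg_r with c; auto. unfold Rdiv. rewrite Rmult_assoc, Rinv_l by lra. unfold c; lra.
  - apply (DD (p t) y h Lt L); auto. unfold d0 in *; lra. lra. Qed.

Section LC.
Variable X : CBanach.
Implicit Types (x y z : X) (v w : nat -> X) (c : nat -> Cplx).

Lemma vadd_4 (a b c d : X) : vadd (vadd a b) (vadd c d) = vadd (vadd a c) (vadd b d).
Proof. rewrite !vadd_assoc. f_equal. rewrite <- !vadd_assoc. f_equal. apply vadd_comm. Qed.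

Fixpoint rsum (m : nat) (f : nat -> R) : R := match m with O => 0 | S k => rsum k f + f k end.

Lemma lincomb_ext m c c' w w' : (forall i, (i < m)%nat -> c i = c' i /\ w i = w' i) -> lincomb m c w = lincomb m c' w'.
Proof. induction m; simpl; intros H; auto. destruct (H m ltac:(lia)) as [-> ->]. rewrite IHm; auto. Qed.
Lemma lincomb_add m c c' w : lincomb m (fun i => Cadd (c i) (c' i)) w = vadd (lincomb m c w) (lincomb m c' w).
Proof. induction m; simpl. rewrite vadd_0; auto. rewrite IHm, vscal_distr_c. apply vadd_4. Qed.
Lemma lincomb_scal m a c w : lincomb m (fun i => Cmul a (c i)) w = vscal a (lincomb m c w).
Proof. induction m; simpl. rewrite vscal_zero; auto. rewrite IHm, vscal_distr_v, vscal_assoc. auto. Qed.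
Lemma lincomb_sub m c c' w : lincomb m (fun i => Csub (c i) (c' i)) w = vsub (lincomb m c w) (lincomb m c' w).
Proof. unfold Csub. rewrite lincomb_add. unfold vsub. f_equal. rewrite vopp_scal, <- lincomb_scal.
  apply lincomb_ext. intros. split; auto. Ceq. Qed.
Lemma lincomb_norm m c w : vnorm (lincomb m c w) <= rsum m (fun i => Cmod (c i) * vnorm (w i)).
Proof. induction m; simpl. rewrite vnorm_zero; lra. eapply Rle_trans. apply vnorm_triangle. rewrite vnorm_scal. lra. Qed.
Lemma rsum_le m f g : (forall i, (i < m)%nat -> f i <= g i) -> rsum m f <= rsum m g.
Proof. induction m; simpl; intros; [lra|]. pose proof (H m ltac:(lia)). pose proof (IHm ltac:(intros; apply H; lia)). lra. Qed.
Lemma rsum_nonneg m f : (forall i, 0 <= f i) -> 0 <= rsum m f.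
Proof. induction m; simpl; intros H; [lra|]. pose proof (H m). pose proof (IHm H). lra. Qed.
Lemma rsum_scal m a f : rsum m (fun i => a * f i) = a * rsum m f.
Proof. induction m; simpl. ring. rewrite IHm. ring. Qed.

Definition span n v y := exists c, y = lincomb n c v.
Lemma span_zero n v : span n v vzero.
Proof. exists (fun _ => C0). induction n; simpl; auto. rewrite <- IHn, vscal_C0, vadd_0. auto. Qed.
Lemma span_add n v y z : span n v y -> span n v z -> span n v (vadd y z).
Proof. intros [c ->] [c' ->]. exists (fun i => Cadd (c i) (c' i)). rewrite lincomb_add; auto. Qed.
Lemma span_scal n v a y : span n v y -> span n v (vscal a y).
Proof. intros [c ->]. exists (fun i => Cmul a (c i)). rewrite lincomb_scal; auto. Qed.
Lemma span_sub n v y z : span n v y -> span n v z -> span n v (vsub y z).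
Proof. intros. unfold vsub. apply span_add; auto. rewrite vopp_scal. apply span_scal; auto. Qed.
Lemma span_lincomb n v m c w : (forall i, (i < m)%nat -> span n v (w i)) -> span n v (lincomb m c w).
Proof. induction m; simpl; intros H. apply span_zero. apply span_add. apply IHm; auto. apply span_scal, H; lia. Qed.
Lemma span_S n v y : span (S n) v y <-> exists z a, span n v z /\ y = vadd z (vscal a (v n)).
Proof. split.
  - intros [c ->]. exists (lincomb n c v), (c n). split; auto. exists c; auto.
  - intros [z [a [[c ->] ->]]]. exists (fun i => if Nat.eq_dec i n then a else c i). simpl.
    destruct (Nat.eq_dec n n); [|congruence]. f_equal. apply lincomb_ext. intros i Hi. destruct (Nat.eq_dec i n); [lia|auto]. Qed.
Lemma span_mono n v y : span n v y -> span (S n) v y.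
Proof. intro H. apply span_S. exists y, C0. split; auto. rewrite vscal_C0, vadd_0; auto. Qed.
Lemma span_last n v : span (S n) v (v n).
Proof. apply span_S. exists vzero, C1. split. apply span_zero. rewrite vscal_1, vadd_0l. auto. Qed.

Definition coord_data n v m w (co : nat -> X -> Cplx) K :=
  0 <= K /\ (forall i, (i < m)%nat -> span n v (w i)) /\
  (forall y, span n v y -> y = lincomb m (fun i => co i y) w) /\
  (forall i y, span n v y -> Cmod (co i y) <= K * vnorm y) /\
  (forall i y z, span n v y -> span n v z -> co i (vadd y z) = Cadd (co i y) (co i z)) /\
  (forall i a y, span n v y -> co i (vscal a y) = Cmul a (co i y)).

Lemma coord_sub n v m w co K i y z : coord_data n v m w co K -> span n v y -> span n v z ->
  co i (vsub y z) = Csub (co i y) (co i z).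
Proof. intros [_ [_ [_ [_ [A S]]]]] Hy Hz. unfold vsub. rewrite A; auto. rewrite vopp_scal, S; auto. Ceq.
  rewrite vopp_scal. apply span_scal; auto. Qed.

Lemma finite_N m (P : nat -> nat -> Prop) : (forall i, (i < m)%nat -> exists N, forall k, (N <= k)%nat -> P i k) ->
  exists N, forall k, (N <= k)%nat -> forall i, (i < m)%nat -> P i k.
Proof. induction m; intros H. exists O. intros; lia.
  destruct IHm as [N1 H1]. intros; apply H; lia. destruct (H m ltac:(lia)) as [N2 H2].
  exists (Nat.max N1 N2). intros k Hk i Hi. destruct (Nat.eq_dec i m). subst. apply H2; lia. apply H1; lia. Qed.

Lemma dist_pos n v m w co K u : coord_data n v m w co K -> ~ span n v u ->
  exists d, 0 < d /\ forall z, span n v z -> d <= vnorm (vsub u z).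
Proof. intros CD Hu. pose proof CD as [HK [Hw [Hrep [Hb [A S]]]]].
  apply NNPP. intro Hn.
  assert (Hseq : forall k : nat, exists z, span n v z /\ vnorm (vsub u z) < / (INR k + 1)).
  { intro k. apply NNPP. intro H. apply Hn. exists (/ (INR k + 1)). split. apply Rinv_0_lt_compat. pose proof (pos_INR k); lra.
    intros z Hz. apply Rnot_lt_le. intro H'. apply H. exists z. auto. }
  set (zs := fun k => proj1_sig (constructive_indefinite_description _ (Hseq k))).
  assert (Hzs : forall k, span n v (zs k) /\ vnorm (vsub u (zs k)) < / (INR k + 1)).
  { intro k. unfold zs. destruct (constructive_indefinite_description _ _) as [z Hz]. simpl. auto. }
  assert (Hinv : forall eps, 0 < eps -> exists N, forall k, (N <= k)%nat -> / (INR k + 1) < eps).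
  { intros eps He. destruct (archimed (/ eps)) as [H1 _]. exists (Z.to_nat (up (/ eps))). intros k Hk.
    apply le_INR in Hk. rewrite INR_IZR_INZ, Z2Nat.id in Hk.
    2:{ apply le_IZR. pose proof (Rinv_0_lt_compat eps He). lra. }
    rewrite <- (Rinv_inv eps). apply Rinv_lt_contravar. apply Rmult_lt_0_compat. apply Rinv_0_lt_compat; auto. pose proof (pos_INR k); lra. lra. }
  assert (Hlim : forall i, exists l, forall eps, 0 < eps -> exists N, forall k, (N <= k)%nat -> Cmod (Csub (co i (zs k)) l) < eps).
  { intro i. destruct (C_complete (fun k => co i (zs k))) as [l Hl].
    - intros eps He. destruct (Hinv (eps / (2 * (K + 1)))) as [N HN]. apply Rdiv_lt_0_compat; lra.
      exists N. intros p q Hp Hq. change (Cadd (co i (zs p)) (Copp (co i (zs q)))) with (Csub (co i (zs p)) (co i (zs q))).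
      destruct (Hzs p) as [Sp Np]. destruct (Hzs q) as [Sq Nq].
      rewrite <- (coord_sub _ _ _ _ _ _ i _ _ CD Sp Sq).
      eapply Rle_lt_trans. apply Hb. apply span_sub; auto.
      assert (vnorm (vsub (zs p) (zs q)) < eps / (K + 1)).
      { eapply Rle_lt_trans. apply (vsub_tri X (zs p) u (zs q)). rewrite vnorm_sub_sym.
        pose proof (HN p Hp). pose proof (HN q Hq). replace (eps / (K+1)) with (eps / (2 * (K+1)) + eps / (2 * (K+1))) by (field; lra). lra. }
      apply Rle_lt_trans with ((K + 1) * vnorm (vsub (zs p) (zs q))). apply Rmult_le_compat_r. apply vnorm_nonneg. lra.
      apply (Rmult_lt_compat_l (K + 1)) in H; [|lra]. replace ((K+1) * (eps / (K+1))) with eps in H by (field; lra). auto.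
    - exists l. intros eps He. destruct (Hl eps He) as [N HN]. exists N. intros k Hk. apply HN; auto. }
  set (a := fun i => proj1_sig (constructive_indefinite_description _ (Hlim i))).
  assert (Ha : forall i eps, 0 < eps -> exists N, forall k, (N <= k)%nat -> Cmod (Csub (co i (zs k)) (a i)) < eps).
  { intro i. unfold a. destruct (constructive_indefinite_description _ _) as [l Hl]. simpl. auto. }
  set (zst := lincomb m a w).
  assert (Hu0 : vnorm (vsub u zst) = 0).
  { apply Rle_antisym; [|apply vnorm_nonneg]. apply Rnot_lt_le. intro Hpos.
    set (eta := vnorm (vsub u zst) / 2). set (W := rsum m (fun i => vnorm (w i)) + 1).
    assert (HW : 0 < W) by (unfold W; assert (0 <= rsum m (fun i => vnorm (w i))) by (apply rsum_nonneg; intros; apply vnorm_nonneg); lra).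
    destruct (finite_N m (fun i k => Cmod (Csub (co i (zs k)) (a i)) < eta / W)) as [N1 HN1].
    { intros i _. apply Ha. unfold eta; apply Rdiv_lt_0_compat; lra. }
    destruct (Hinv eta) as [N2 HN2]. unfold eta; lra.
    set (k := Nat.max N1 N2). destruct (Hzs k) as [Sk Nk].
    assert (E : vsub (zs k) zst = lincomb m (fun i => Csub (co i (zs k)) (a i)) w).
    { rewrite lincomb_sub. f_equal. apply Hrep; auto. }
    assert (vnorm (vsub (zs k) zst) <= eta / W * (W - 1)).
    { rewrite E. eapply Rle_trans. apply lincomb_norm. unfold W. replace (rsum m (fun i => vnorm (w i)) + 1 - 1) with (rsum m (fun i => vnorm (w i))) by ring.
      rewrite <- rsum_scal. apply rsum_le. intros i Hi. apply Rmult_le_compat_r. apply vnorm_nonneg. left. apply HN1; auto. lia. }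
    assert (eta / W * (W - 1) < eta) by (unfold Rdiv; assert (0 < eta) by (unfold eta; lra); apply Rmult_lt_reg_r with W; auto; field_simplify; nra).
    pose proof (vsub_tri X u (zs k) zst). specialize (HN2 k ltac:(lia)). unfold eta in *. lra. }
  apply vnorm_eq0 in Hu0. apply Hu. replace u with zst. apply span_lincomb; auto.
  rewrite <- (vadd_sub X u zst), Hu0, vadd_0. auto. Qed.
End LC.

Section CO.
Variable X : CBanach.
Implicit Types (x y z : X) (v w : nat -> X).

Lemma vsub_sub_cancel y p q : vsub (vsub y p) (vsub y q) = @vsub X q p.
Proof. unfold vsub. rewrite vopp_add, vopp_opp.
  rewrite vadd_4. rewrite vadd_opp, vadd_0l. apply vadd_comm. Qed.

Lemma vsub_add_pair y y' p p' : vsub (vadd y y') (vadd p p') = vadd (@vsub X y p) (vsub y' p').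
Proof. unfold vsub. rewrite vopp_add. apply vadd_4. Qed.

Lemma vadd_vsub_cancel y p : vadd (@vsub X y p) p = y.
Proof. unfold vsub. rewrite <- vadd_assoc, (vadd_comm (vopp p)), vadd_opp, vadd_0. auto. Qed.

Lemma coord_transfer n v m w co K : coord_data X n v m w co K ->
  (forall y, span X (S n) v y -> span X n v y) -> coord_data X (S n) v m w co K.
Proof. intros [HK [Hw [Hr [Hb [A S]]]]] H. split; [auto|]. split; [intros i Hi; apply span_mono; auto|].
  split; [intros y Hy; apply Hr; auto|]. split; [intros i y Hy; apply Hb; auto|].
  split; [intros i y z Hy Hz; apply A; auto| intros i a y Hy; apply S; auto]. Qed.

Lemma coord_exists n v : exists m w co K, coord_data X n v m w co K.
Proof. induction n as [|n IH].
  - exists O, v, (fun _ _ => C0), 0. split; [lra|]. split; [intros; lia|]. split; [intros y [c ->]; reflexivity|].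
    split; [intros i y _; rewrite Cmod_C0; pose proof (vnorm_nonneg y); lra|]. split; intros; Ceq.
  - destruct IH as [m [w [co [K CD]]]]. set (u := v n).
    destruct (classic (span X n v u)) as [Hu|Hu].
    + exists m, w, co, K. apply coord_transfer; auto. intros y Hy. apply span_S in Hy as [z [a [Hz ->]]].
      apply span_add; auto. apply span_scal; auto.
    + destruct (dist_pos X n v m w co K u CD Hu) as [d [Hd Hdist]].
      pose proof CD as [HK [Hw [Hr [Hb [A Sc]]]]].
      set (P := fun y a => span X n v (vsub y (vscal a u))).
      assert (Uniq : forall y a b, P y a -> P y b -> a = b).
      { intros y a b Ha Hb'. apply NNPP. intro Hne.
        assert (Hd0 : Csub a b <> C0) by (intro E; apply Hne; replace a with (Cadd (Csub a b) b) by Ceq; rewrite E; Ceq).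
        apply Hu. pose proof (span_sub X n v _ _ Hb' Ha). unfold P in *. rewrite vsub_sub_cancel, vsub_scal in H.
        apply (span_scal X n v (Cinv (Csub a b))) in H. rewrite vscal_assoc, Cmul_comm, Cmul_inv_r, vscal_1 in H; auto. }
      assert (Ex : forall y, span X (S n) v y -> exists a, P y a).
      { intros y Hy. apply span_S in Hy as [z [a [Hz ->]]]. exists a. unfold P. change (v n) with u. rewrite (vadd_comm z), vsub_add. auto. }
      set (al := fun y => epsilon (inhabits C0) (P y)).
      assert (Hal : forall y, span X (S n) v y -> P y (al y)) by (intros y Hy; apply epsilon_spec, Ex; auto).
      set (zp := fun y => vsub y (vscal (al y) u)).
      assert (Hal_add : forall y y', span X (S n) v y -> span X (S n) v y' -> al (vadd y y') = Cadd (al y) (al y')).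
      { intros y y' Hy Hy'. apply (Uniq (vadd y y')). apply Hal. apply span_add; auto.
        unfold P. rewrite vscal_distr_c, vsub_add_pair. apply span_add; apply Hal; auto. }
      assert (Hal_scal : forall a y, span X (S n) v y -> al (vscal a y) = Cmul a (al y)).
      { intros a y Hy. apply (Uniq (vscal a y)). apply Hal. apply span_scal; auto.
        unfold P. rewrite <- vscal_assoc, <- vscal_sub. apply span_scal; apply Hal; auto. }
      assert (Hal_bd : forall y, span X (S n) v y -> Cmod (al y) * d <= vnorm y).
      { intros y Hy. set (a := al y). destruct (Req_dec (Cmod a) 0) as [E|E].
        { rewrite E. pose proof (vnorm_nonneg y). lra. }
        assert (Ha0 : a <> C0) by (intro E'; apply E; rewrite E'; apply Cmod_C0).
        set (z' := vscal (Copp (Cinv a)) (zp y)).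
        assert (Hz' : span X n v z') by (apply span_scal, Hal; auto).
        assert (Ey : y = vscal a (vsub u z')).
        { unfold z', zp. rewrite vscal_sub, vscal_assoc.
          replace (Cmul a (Copp (Cinv a))) with (-1, 0 : R).
          2:{ replace (Cmul a (Copp (Cinv a))) with (Cmul (-1,0) (Cmul a (Cinv a))) by Ceq. rewrite Cmul_inv_r; auto. Ceq. }
          rewrite <- vopp_scal. unfold vsub at 1. rewrite vopp_opp. fold a. rewrite vadd_comm. symmetry. apply vadd_vsub_cancel. }
        rewrite Ey. rewrite vnorm_scal. apply Rmult_le_compat_l. apply Cmod_nonneg. apply Hdist; auto. }
      set (w' := fun i => if Nat.eq_dec i m then u else w i).
      set (co' := fun i y => if Nat.eq_dec i m then al y else co i (zp y)).
      set (K' := K * (1 + vnorm u / d) + / d).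
      assert (HK' : 0 <= K') by (unfold K'; pose proof (vnorm_nonneg u); assert (0 <= vnorm u / d) by (apply Rmult_le_pos; auto; left; apply Rinv_0_lt_compat; auto);
        assert (0 < /d) by (apply Rinv_0_lt_compat; auto); nra).
      assert (Hzp : forall y, span X (S n) v y -> span X n v (zp y)) by (intros; apply Hal; auto).
      exists (S m), w', co', K'. repeat split; auto.
      * intros i Hi. unfold w'. destruct (Nat.eq_dec i m). apply span_last. apply span_mono, Hw. lia.
      * intros y Hy. simpl. unfold co', w'. destruct (Nat.eq_dec m m); [|congruence].
        rewrite (lincomb_ext X m _ (fun i => co i (zp y)) _ w).
        rewrite <- Hr by auto. unfold zp. apply eq_sym, vadd_vsub_cancel.
        intros i Hi. destruct (Nat.eq_dec i m); [lia|auto].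
      * intros i y Hy. unfold co'. destruct (Nat.eq_dec i m).
        -- pose proof (Hal_bd y Hy). apply Rle_trans with (/ d * vnorm y).
           apply Rmult_le_reg_r with d; auto. replace (/ d * vnorm y * d) with (vnorm y) by (field; lra). lra.
           apply Rmult_le_compat_r. apply vnorm_nonneg. unfold K'. pose proof (vnorm_nonneg u).
           assert (0 <= vnorm u / d) by (apply Rmult_le_pos; auto; left; apply Rinv_0_lt_compat; auto). nra.
        -- eapply Rle_trans. apply Hb. apply Hzp; auto.
           assert (vnorm (zp y) <= (1 + vnorm u / d) * vnorm y).
           { unfold zp. eapply Rle_trans. apply vnorm_sub_le. rewrite vnorm_scal.
             pose proof (Hal_bd y Hy). assert (Cmod (al y) <= vnorm y / d).
             { apply Rmult_le_reg_r with d; auto. replace (vnorm y / d * d) with (vnorm y) by (field; lra). lra. }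
             pose proof (vnorm_nonneg u). apply Rle_trans with (vnorm y + vnorm y / d * vnorm u).
             apply Rplus_le_compat_l. apply Rmult_le_compat_r; auto. right. field. lra. }
           apply Rle_trans with (K * ((1 + vnorm u / d) * vnorm y)). apply Rmult_le_compat_l; auto.
           unfold K'. pose proof (vnorm_nonneg y). assert (0 < /d) by (apply Rinv_0_lt_compat; auto). nra.
      * intros i y z Hy Hz. unfold co'. destruct (Nat.eq_dec i m). apply Hal_add; auto.
        rewrite <- A by (apply Hzp; auto). f_equal. unfold zp. rewrite Hal_add by auto. rewrite vscal_distr_c. apply vsub_add_pair.
      * intros i a y Hy. unfold co'. destruct (Nat.eq_dec i m). apply Hal_scal; auto.
        rewrite <- Sc by (apply Hzp; auto). f_equal. unfold zp. rewrite Hal_scal by auto. rewrite <- vscal_assoc, vscal_sub. auto. Qed.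

Theorem coords (S : X -> X) : bounded_op S -> finite_rank S ->
  exists m (w : nat -> X) (l : nat -> X -> Cplx), (forall i, in_dual (l i)) /\ forall x, S x = lincomb m (fun i => l i x) w.
Proof. intros [S1 [S2 [MS HMS]]] [n [v Hv]]. destruct (coord_exists n v) as [m [w [co [K CD]]]].
  pose proof CD as [HK [Hw [Hr [Hb [A Sc]]]]].
  assert (Hsp : forall x, span X n v (S x)) by (intro x; destruct (Hv x) as [c Hc]; exists c; auto).
  exists m, w, (fun i x => co i (S x)). split.
  - intro i. split; [split|].
    + intros x y. rewrite S1. apply A; auto.
    + intros a x. rewrite S2. apply Sc; auto.
    + exists (K * Rmax MS 0). intro x. eapply Rle_trans. apply Hb; auto. rewrite Rmult_assoc. apply Rmult_le_compat_l; auto.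
      eapply Rle_trans. apply HMS. apply Rmult_le_compat_r. apply vnorm_nonneg. apply Rmax_l.
  - intro x. apply Hr; auto. Qed.
End CO.

Fixpoint csum (n : nat) (c : nat -> Cplx) : Cplx := match n with O => C0 | S k => Cadd (csum k c) (c k) end.

Lemma csum_ext n c c' : (forall i, (i < n)%nat -> c i = c' i) -> csum n c = csum n c'.
Proof. induction n; simpl; intros; auto. rewrite IHn, H; auto. Qed.
Lemma csum_add n c c' : csum n (fun i => Cadd (c i) (c' i)) = Cadd (csum n c) (csum n c').
Proof. induction n; simpl. Ceq. rewrite IHn. Ceq. Qed.
Lemma csum_scal n a c : csum n (fun i => Cmul a (c i)) = Cmul a (csum n c).
Proof. induction n; simpl. Ceq. rewrite IHn. Ceq. Qed.
Lemma csum_zero n : csum n (fun _ => C0) = C0.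
Proof. induction n; simpl; auto. rewrite IHn. Ceq. Qed.
Lemma csum_exch n m (c : nat -> nat -> Cplx) : csum n (fun i => csum m (fun j => c i j)) = csum m (fun j => csum n (fun i => c i j)).
Proof. induction n; simpl. rewrite csum_zero; auto. rewrite IHn, <- csum_add. auto. Qed.
Lemma csum_tele n (a : nat -> Cplx) : csum n (fun j => Csub (a j) (a (S j))) = Csub (a O) (a n).
Proof. induction n; simpl. Ceq. rewrite IHn. Ceq. Qed.
Lemma csum_bound n c : Cmod (csum n c) <= rsum n (fun i => Cmod (c i)).
Proof. induction n; simpl. rewrite Cmod_C0; lra. eapply Rle_trans. apply Cmod_tri. lra. Qed.
Lemma rsum_const n a : rsum n (fun _ => a) = INR n * a.
Proof. induction n; simpl; [ring|]. rewrite IHn. destruct n; simpl; ring. Qed.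
Lemma dual_lincomb {X : CBanach} (L : X -> Cplx) m c w : Clinear_fun L -> L (lincomb m c w) = csum m (fun i => Cmul (c i) (L (w i))).
Proof. intro HL. induction m; simpl. apply dual_zero; auto. destruct HL as [A S]. rewrite A, S, IHm. auto. Qed.

Section Fun.
Variable X : CBanach.
Lemma in_Au_csum n (G : nat -> X -> Cplx) : (forall i, (i < n)%nat -> in_Au (G i)) -> in_Au (fun x => csum n (fun i => G i x)).
Proof. induction n; simpl; intros H. apply in_Au_const. apply in_Au_add. apply IHn; auto. apply H; lia. Qed.
Lemma phi_csum phi n (G : nat -> X -> Cplx) : character phi -> (forall i, (i < n)%nat -> in_Au (G i)) ->
  phi (fun x => csum n (fun i => G i x)) = csum n (fun i => phi (G i)).
Proof. intro Hphi. induction n; simpl; intros H. apply phi_const; auto.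
  rewrite phi_add; auto. rewrite IHn; auto. all: try (apply in_Au_csum; auto). all: try (apply H; lia). Qed.

Lemma bounded_scal_op (c : Cplx) (T : X -> X) : bounded_op T -> bounded_op (fun x => vscal c (T x)).
Proof. intros [A [S [M HM]]]. split; [|split].
  - intros x y. rewrite A, vscal_distr_v. auto.
  - intros a x. rewrite S, !vscal_assoc, Cmul_comm. auto.
  - exists (Cmod c * M). intro x. rewrite vnorm_scal, Rmult_assoc. apply Rmult_le_compat_l. apply Cmod_nonneg. auto. Qed.

Lemma in_Au_comp_lin (f : X -> Cplx) (A : X -> X) : bounded_op A -> (forall x, inB x -> inB (A x)) -> in_Au f -> in_Au (fun x => f (A x)).
Proof. intros HA HB Hf. replace (fun x => f (A x)) with (fun x => f (vadd (A x) vzero)).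
  apply in_Au_comp_affine; auto. intros x Hx. rewrite vadd_0. auto. extensionality x. rewrite vadd_0. auto. Qed.
End Fun.

Section Main.
Variable X : CBanach.
Variable S : X -> X.
Hypothesis HS : bounded_op S.
Hypothesis HP : op_norm_is (fun x => vsub x (S x)) 1.

Definition Qop t (x : X) := vadd x (vscal (-t, 0) (S x)).

Lemma S_zero : S vzero = vzero.
Proof. destruct HS as [_ [H _]]. apply lin_zero; auto. Qed.

Lemma Q_bounded t : bounded_op (Qop t).
Proof. destruct HS as [A [Sc [M HM]]]. unfold Qop. split; [|split].
  - intros x y. rewrite A, vscal_distr_v. apply vadd_4.
  - intros a x. rewrite Sc, vscal_distr_v, !vscal_assoc, Cmul_comm. auto.
  - exists (1 + Rabs t * M). intro x. eapply Rle_trans. apply vnorm_triangle. rewrite vnorm_real_scal, Rabs_Ropp.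
    specialize (HM x). pose proof (Rabs_pos t). pose proof (vnorm_nonneg x). assert (Rabs t * vnorm (S x) <= Rabs t * (M * vnorm x)) by (apply Rmult_le_compat_l; auto). nra. Qed.

Lemma P_eq x : vsub x (S x) = Qop 1 x.
Proof. unfold Qop, vsub. rewrite vopp_scal. auto. Qed.

Lemma P_contr x : vnorm (vsub x (S x)) <= vnorm x.
Proof. destruct (Req_dec (vnorm x) 0) as [E|E].
  { apply vnorm_eq0 in E. subst. rewrite S_zero, vsub_diag, vnorm_zero. lra. }
  assert (Hx : 0 < vnorm x) by (pose proof (vnorm_nonneg x); lra).
  destruct HP as [Hub _]. set (u := vscal (/ vnorm x, 0) x).
  assert (Hu : vnorm u = 1) by (unfold u; rewrite vnorm_real_scal, Rabs_pos_eq; [field; lra| left; apply Rinv_0_lt_compat; auto]).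
  assert (H1 : vnorm (vsub u (S u)) <= 1) by (apply Hub; exists u; split; auto; lra).
  destruct HS as [_ [Sc _]]. unfold u in H1. rewrite Sc, <- vscal_sub, vnorm_real_scal, Rabs_pos_eq in H1 by (left; apply Rinv_0_lt_compat; auto).
  apply Rmult_le_reg_l with (/ vnorm x). apply Rinv_0_lt_compat; auto. rewrite Rinv_l; lra. Qed.

Lemma Q_contr t x : 0 <= t <= 1 -> vnorm (Qop t x) <= vnorm x.
Proof. intro Ht. assert (E : Qop t x = vadd (vscal (1 - t, 0) x) (vscal (t, 0) (vsub x (S x)))).
  { rewrite P_eq. unfold Qop. rewrite vscal_distr_v, vadd_assoc, <- vscal_distr_c, vscal_assoc.
    replace (Cadd (1 - t, 0) (t, 0)) with C1 by Ceq. rewrite vscal_1. f_equal. f_equal. Ceq. }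
  rewrite E. eapply Rle_trans. apply vnorm_triangle. rewrite !vnorm_real_scal, !Rabs_pos_eq by lra.
  pose proof (P_contr x). pose proof (vnorm_nonneg x). nra. Qed.

Lemma Q_0 x : Qop 0 x = x.
Proof. unfold Qop. replace (-0, 0) with C0 by Ceq. rewrite vscal_C0, vadd_0. auto. Qed.

Lemma Q_step t s x : Qop (t + s) x = vadd (Qop t x) (vscal (-s, 0) (S x)).
Proof. unfold Qop. rewrite <- vadd_assoc, <- vscal_distr_c. f_equal. f_equal. Ceq. Qed.
End Main.

Lemma csum_sub n c c' : csum n (fun i => Csub (c i) (c' i)) = Csub (csum n c) (csum n c').
Proof. induction n; simpl. Ceq. rewrite IHn. Ceq. Qed.

Lemma rsum_term m f i : (forall k, 0 <= f k) -> (i < m)%nat -> f i <= rsum m f.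
Proof. induction m; intros H Hi; [lia|]. simpl. destruct (Nat.eq_dec i m).
  subst. pose proof (rsum_nonneg m f H). lra. pose proof (IHm H ltac:(lia)). pose proof (H m). lra. Qed.

Lemma bounded_id {X : CBanach} : bounded_op (fun x : X => x).
Proof. split; [|split]. reflexivity. reflexivity. exists 1. intros; lra. Qed.

Lemma sum_bound {X : CBanach} (l : nat -> X -> Cplx) (w : nat -> X) m : (forall i, in_dual (l i)) ->
  exists C, 0 <= C /\ forall x, rsum m (fun i => Cmod (l i x) * vnorm (w i)) <= C * vnorm x.
Proof. intro Hl. induction m. exists 0. split. lra. intros; simpl. pose proof (vnorm_nonneg x); nra.
  destruct IHm as [C [HC HCx]]. destruct (dual_bound _ (Hl m)) as [M [HM BM]].
  exists (C + M * vnorm (w m)). split. pose proof (vnorm_nonneg (w m)); nra.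
  intro x. simpl. specialize (HCx x). specialize (BM x). pose proof (vnorm_nonneg (w m)). pose proof (vnorm_nonneg x).
  assert (Cmod (l m x) * vnorm (w m) <= M * vnorm x * vnorm (w m)) by (apply Rmult_le_compat_r; auto). nra. Qed.

Section MS.
Variable X : CBanach.
Variable S : X -> X.
Hypothesis HS : bounded_op S.
Hypothesis HP : op_norm_is (fun x => vsub x (S x)) 1.
Variable phi : (X -> Cplx) -> Cplx.
Hypothesis Hch : character phi.
Hypothesis H0 : forall xs, in_dual xs -> phi xs = C0.
Variable f : X -> Cplx.
Hypothesis Hf : in_Au f.
Variable m : nat.
Variable w : nat -> X.
Variable l : nat -> X -> Cplx.
Hypothesis Hl : forall i, in_dual (l i).
Hypothesis Hrep : forall x, S x = lincomb m (fun i => l i x) w.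

Lemma inB_scal (r : R) (z : X) : 0 <= r <= 1 -> inB z -> inB (vscal (r, 0) z).
Proof. intros Hr Hz. unfold inB in *. rewrite vnorm_real_scal, Rabs_pos_eq by lra. pose proof (vnorm_nonneg z). nra. Qed.

Lemma A3 r : 0 < r < 1 -> forall eps, 0 < eps ->
  Cmod (Csub (phi (fun z => f (vscal (r, 0) z))) (phi (fun x => f (vscal (r, 0) (vsub x (S x)))))) <= eps.
Proof. intros Hr eps He. pose proof Hf as [[Mf Bf] [Hhol Hunif]].
  pose proof HS as [SA [SS [MS HMS]]]. set (MS' := Rmax MS 0).
  assert (HMS' : forall x, vnorm (S x) <= MS' * vnorm x).
  { intro x. eapply Rle_trans. apply HMS. apply Rmult_le_compat_r. apply vnorm_nonneg. apply Rmax_l. }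
  assert (HMS0 : 0 <= MS') by apply Rmax_r.
  destruct (sum_bound l w m Hl) as [C [HC HCx]].
  set (eps' := eps / (MS' + C + 1)). assert (He' : 0 < eps') by (unfold eps'; apply Rdiv_lt_0_compat; lra).
  destruct (unif_frechet f r Hhol Hunif ltac:(lra) eps' He') as [eta [Heta UF]].
  set (W := rsum m (fun i => vnorm (w i))).
  assert (HW : 0 <= W) by (apply rsum_nonneg; intros; apply vnorm_nonneg).
  assert (HWi : forall i, (i < m)%nat -> vnorm (w i) <= W) by (intros; unfold W; apply (rsum_term m (fun i => vnorm (w i))); auto; intros; apply vnorm_nonneg).
  set (tau := Rmin eta (1 - r) / (2 * (W + 1))).
  assert (Htau : 0 < tau) by (unfold tau; apply Rdiv_lt_0_compat; [apply Rmin_glb_lt; lra| lra]).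
  assert (HtauW : tau * W < Rmin eta (1 - r)).
  { unfold tau. set (q := Rmin eta (1 - r)). assert (0 < q) by (unfold q; apply Rmin_glb_lt; lra).
    replace (q / (2 * (W + 1)) * W) with (q * (W / (2 * (W + 1)))) by (field; lra).
    assert (W / (2 * (W + 1)) < 1). { apply Rmult_lt_reg_r with (2 * (W + 1)). lra. field_simplify; lra. }
    rewrite <- (Rmult_1_r q) at 2. apply Rmult_lt_compat_l; auto. }
  destruct (INR_unbounded (MS' / eta + 1)) as [N HN].
  assert (HNpos : 1 < INR N) by (assert (0 <= MS' / eta) by (apply Rmult_le_pos; auto; left; apply Rinv_0_lt_compat; auto); lra).
  set (NR := INR N).
  assert (HNR : MS' / NR < eta).
  { apply Rmult_lt_reg_r with NR. unfold NR; lra. unfold Rdiv. rewrite Rmult_assoc, Rinv_l by (unfold NR; lra).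
    assert (MS' / eta < NR) by (unfold NR; lra). apply Rmult_lt_reg_r with (/ eta). apply Rinv_0_lt_compat; auto.
    replace (eta * NR * / eta) with NR by (field; lra). rewrite Rmult_1_r. auto. }
  set (c := (/ (NR * tau), 0)).
  set (Fr := fun z => f (vscal (r, 0) z)).
  set (xj := fun (j : nat) x => Qop X S (INR j / NR) x).
  set (T := fun (j i : nat) x => vadd (xj j x) (vscal (tau, 0) (w i))).
  set (Kf := fun i x => csum N (fun j => Cmul c (Csub (Fr (T j i x)) (Fr (xj j x))))).
  set (D := fun x => Csub (Csub (Fr x) (Fr (vsub x (S x)))) (csum m (fun i => Cmul (l i x) (Kf i x)))).
  assert (Hxj : forall j x, (j <= N)%nat -> vnorm (xj j x) <= vnorm x).
  { intros j x Hj. apply Q_contr; auto. split. apply Rmult_le_pos. apply pos_INR. left; apply Rinv_0_lt_compat; unfold NR; lra.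
    apply Rmult_le_reg_r with NR. unfold NR; lra. unfold Rdiv. rewrite Rmult_assoc, Rinv_l by (unfold NR; lra). rewrite Rmult_1_r, Rmult_1_l.
    apply le_INR; auto. }
  assert (AuFr : forall j, (j <= N)%nat -> in_Au (fun x => Fr (xj j x))).
  { intros j Hj. unfold Fr. apply (in_Au_comp_lin X f (fun x => vscal (r, 0) (xj j x))); auto.
    apply bounded_scal_op. apply Q_bounded; auto.
    intros x Hx. apply inB_scal. lra. unfold inB in *. pose proof (Hxj j x Hj). lra. }
  assert (AuT : forall j i, (j <= N)%nat -> (i < m)%nat -> in_Au (fun x => Fr (T j i x))).
  { intros j i Hj Hi. unfold Fr, T. replace (fun x => f (vscal (r, 0) (vadd (xj j x) (vscal (tau, 0) (w i)))))
      with (fun x => f (vadd (vscal (r, 0) (xj j x)) (vscal (r, 0) (vscal (tau, 0) (w i))))) by (extensionality x; rewrite vscal_distr_v; auto).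
    apply in_Au_comp_affine; auto. apply bounded_scal_op. apply Q_bounded; auto.
    intros x Hx. unfold inB in *. eapply Rle_lt_trans. apply vnorm_triangle. rewrite !vnorm_real_scal, !Rabs_pos_eq by lra.
    pose proof (Hxj j x Hj). pose proof (HWi i Hi). pose proof (vnorm_nonneg (xj j x)).
    pose proof (Rmin_r eta (1 - r)). assert (tau * vnorm (w i) <= tau * W) by (apply Rmult_le_compat_l; lra). nra. }
  assert (AuK : forall i, (i < m)%nat -> in_Au (Kf i)).
  { intros i Hi. unfold Kf. apply in_Au_csum. intros j Hj. apply in_Au_scal; auto. apply in_Au_sub; auto. apply AuT; lia. apply AuFr; lia. }
  assert (AuF : in_Au Fr) by (unfold Fr; apply (in_Au_comp_lin X f (fun z => vscal (r, 0) z)); auto;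
    [apply bounded_scal_op, bounded_id| intros; apply inB_scal; auto; lra]).
  assert (AuFP : in_Au (fun x => Fr (vsub x (S x)))).
  { unfold Fr. apply (in_Au_comp_lin X f (fun x => vscal (r, 0) (vsub x (S x)))); auto.
    replace (fun x => vscal (r, 0) (vsub x (S x))) with (fun x => vscal (r, 0) (Qop X S 1 x)) by (extensionality x; rewrite P_eq; auto).
    apply bounded_scal_op. apply Q_bounded; auto.
    intros x Hx. apply inB_scal. lra. unfold inB in *. pose proof (P_contr X S HS HP x). lra. }
  assert (AuS : in_Au (fun x => csum m (fun i => Cmul (l i x) (Kf i x)))).
  { apply in_Au_csum. intros i Hi. apply in_Au_mul; auto. apply in_Au_dual; auto. }
  assert (PD : phi D = Csub (phi Fr) (phi (fun x => Fr (vsub x (S x))))).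
  { unfold D. rewrite phi_sub; auto. 2: apply in_Au_sub; auto.
    rewrite phi_sub; auto. rewrite (phi_csum X phi m (fun i x => Cmul (l i x) (Kf i x))); auto.
    2:{ intros i Hi. apply in_Au_mul; auto. apply in_Au_dual; auto. }
    rewrite (csum_ext m _ (fun _ => C0)). rewrite csum_zero. Ceq.
    intros i Hi. rewrite phi_mul; auto. rewrite H0; auto. apply Cmul_0_l. apply in_Au_dual; auto. }
  replace (Csub (phi Fr) (phi (fun x => f (vscal (r,0) (vsub x (S x)))))) with (phi D) by (rewrite PD; reflexivity). apply phi_bound; auto.
  { unfold D. apply in_Au_sub; auto. apply in_Au_sub; auto. }
  intros x Hx. assert (Hx1 : vnorm x < 1) by exact Hx. pose proof (vnorm_nonneg x) as Hx0.
  assert (HNR0 : 0 < NR) by (unfold NR; lra).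
  set (Br := fun j => Csub (Csub (Fr (xj j x)) (Fr (xj (Nat.succ j) x)))
       (csum m (fun i => Cmul (l i x) (Cmul c (Csub (Fr (T j i x)) (Fr (xj j x))))))).
  assert (ED : D x = csum N Br).
  { unfold Br. rewrite csum_sub, csum_tele, csum_exch.
    assert (X0 : xj O x = x) by (unfold xj; replace (INR 0 / NR) with 0 by (simpl; field; lra); apply Q_0).
    assert (XN : xj N x = vsub x (S x)) by (unfold xj; fold NR; replace (NR / NR) with 1 by (field; lra); rewrite P_eq; auto).
    rewrite X0, XN. unfold D. f_equal. apply csum_ext. intros i Hi. unfold Kf. rewrite <- csum_scal. auto. }
  rewrite ED. eapply Rle_trans. apply csum_bound.
  apply Rle_trans with (rsum N (fun _ => eps' * (MS' + C) / NR)).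
  2:{ rewrite rsum_const. fold NR. unfold eps'. apply Rle_trans with (eps * ((MS' + C) / (MS' + C + 1))).
      right. field. lra. rewrite <- (Rmult_1_r eps) at 2. apply Rmult_le_compat_l. lra.
      apply Rmult_le_reg_r with (MS' + C + 1). lra. field_simplify; lra. }
  apply rsum_le. intros j Hj.
  set (y := vscal (r, 0) (xj j x)).
  assert (Hy : vnorm y <= r).
  { unfold y. rewrite vnorm_real_scal, Rabs_pos_eq by lra. pose proof (Hxj j x ltac:(lia)). pose proof (vnorm_nonneg (xj j x)). nra. }
  apply holo_iff in Hhol. destruct (Hhol y) as [L HL]. unfold inB. lra.
  pose proof HL as [[[LA LS] _] _].
  set (h := vscal (r, 0) (vscal (- / NR, 0) (S x))).
  set (hi := fun i => vscal (r, 0) (vscal (tau, 0) (w i))).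
  assert (E1 : Fr (xj (Nat.succ j) x) = f (vadd y h)).
  { unfold Fr, xj, y, h. rewrite <- vscal_distr_v. f_equal. f_equal.
    replace (INR (Nat.succ j) / NR) with (INR j / NR + / NR) by (rewrite S_INR; field; lra). apply Q_step. }
  assert (E2 : forall i, Fr (T j i x) = f (vadd y (hi i))).
  { intro i. unfold Fr, T, y, hi. rewrite vscal_distr_v. auto. }
  assert (Hh : vnorm h < eta).
  { unfold h. rewrite !vnorm_real_scal, Rabs_pos_eq by lra. rewrite Rabs_Ropp, Rabs_pos_eq by (left; apply Rinv_0_lt_compat; lra).
    pose proof (HMS' x). pose proof (vnorm_nonneg (S x)).
    apply Rle_lt_trans with (MS' / NR); auto. unfold Rdiv.
    assert (vnorm (S x) <= MS') by nra. assert (0 < / NR) by (apply Rinv_0_lt_compat; lra).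
    apply Rle_trans with (1 * (/ NR * MS')). apply Rmult_le_compat; try lra. apply Rmult_le_pos; lra. apply Rmult_le_compat_l; lra. lra. }
  assert (Hhi : forall i, (i < m)%nat -> vnorm (hi i) <= tau * vnorm (w i) /\ vnorm (hi i) < eta).
  { intros i Hi. unfold hi. rewrite !vnorm_real_scal, !Rabs_pos_eq by lra.
    pose proof (vnorm_nonneg (w i)). pose proof (HWi i Hi). pose proof (Rmin_l eta (1 - r)).
    assert (tau * vnorm (w i) <= tau * W) by (apply Rmult_le_compat_l; lra). assert (0 <= tau * vnorm (w i)) by (apply Rmult_le_pos; lra). split; nra. }
  set (e0 := Csub (Csub (f (vadd y h)) (f y)) (L h)).
  set (ei := fun i => Csub (Csub (f (vadd y (hi i))) (f y)) (L (hi i))).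
  assert (Be0 : Cmod e0 <= eps' * vnorm h) by (apply UF; auto).
  assert (Bei : forall i, (i < m)%nat -> Cmod (ei i) <= eps' * (tau * vnorm (w i))).
  { intros i Hi. destruct (Hhi i Hi). eapply Rle_trans. apply UF; auto. apply Rmult_le_compat_l; lra. }
  set (Sig := csum m (fun i => Cmul (l i x) (L (w i)))).
  assert (ELh : L h = Cmul (- (r / NR), 0) Sig).
  { unfold h. rewrite !LS, Hrep, dual_lincomb by (split; auto). fold Sig. unfold Cmul; apply injective_projections; simpl; field; lra. }
  assert (Ecs : csum m (fun i => Cmul (l i x) (Cmul c (Csub (Fr (T j i x)) (Fr (xj j x))))) =
                Cadd (csum m (fun i => Cmul (l i x) (Cmul c (ei i)))) (Cmul (r / NR, 0) Sig)).
  { unfold Sig. rewrite <- csum_scal, <- csum_add. apply csum_ext. intros i Hi. rewrite E2. change (Fr (xj j x)) with (f y).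
    unfold y. fold y. unfold ei, hi. rewrite !LS. unfold c.
    destruct (l i x) as [a1 a2], (L (w i)) as [b1 b2], (f (vadd y (vscal (r, 0) (vscal (tau, 0) (w i))))) as [u1 u2], (f y) as [v1 v2].
    unfold Csub, Cadd, Copp, Cmul. apply injective_projections; simpl; field; lra. }
  assert (EBr : Br j = Copp (Cadd e0 (csum m (fun i => Cmul (l i x) (Cmul c (ei i)))))).
  { unfold Br. rewrite Ecs, E1. change (Fr (xj j x)) with (f y). unfold e0. rewrite ELh.
    unfold Csub, Cadd, Copp, Cmul. apply injective_projections; simpl; field; lra. }
  rewrite EBr, Cmod_opp. eapply Rle_trans. apply Cmod_tri. eapply Rle_trans. apply Rplus_le_compat_r. apply Be0.
  eapply Rle_trans. apply Rplus_le_compat_l. apply csum_bound.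
  apply Rle_trans with (eps' * (r / NR * vnorm (S x)) + rsum m (fun i => eps' * (/ NR) * (Cmod (l i x) * vnorm (w i)))).
  { apply Rplus_le_compat.
    - apply Rmult_le_compat_l. lra. unfold h. rewrite !vnorm_real_scal, Rabs_pos_eq by lra.
      rewrite Rabs_Ropp, Rabs_pos_eq by (left; apply Rinv_0_lt_compat; lra). right. unfold Rdiv. ring.
    - apply rsum_le. intros i Hi. rewrite !Cmod_mul. unfold c. rewrite Cmod_real, Rabs_pos_eq by (left; apply Rinv_0_lt_compat; nra).
      pose proof (Bei i Hi). pose proof (Cmod_nonneg (l i x)). pose proof (Cmod_nonneg (ei i)).
      apply Rle_trans with (Cmod (l i x) * (/ (NR * tau) * (eps' * (tau * vnorm (w i))))).
      apply Rmult_le_compat_l; auto. apply Rmult_le_compat_l; auto. left; apply Rinv_0_lt_compat; nra.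
      right. field. lra. }
  rewrite rsum_scal. pose proof (HCx x). pose proof (HMS' x). pose proof (vnorm_nonneg (S x)).
  assert (HiN : 0 < / NR) by (apply Rinv_0_lt_compat; lra).
  assert (eps' * (/ NR) * rsum m (fun i => Cmod (l i x) * vnorm (w i)) <= eps' * (/ NR) * C)
    by (apply Rmult_le_compat_l; [apply Rmult_le_pos; lra| nra]).
  assert (r * vnorm (S x) <= MS') by nra.
  assert (eps' * (r / NR * vnorm (S x)) <= eps' * (/ NR) * MS').
  { replace (eps' * (r / NR * vnorm (S x))) with (eps' * (/ NR) * (r * vnorm (S x))) by (unfold Rdiv; ring).
    apply Rmult_le_compat_l; auto. apply Rmult_le_pos; lra. }
  assert (eps' * (MS' + C) / NR = eps' * (/ NR) * MS' + eps' * (/ NR) * C) by (unfold Rdiv; ring).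
  lra.
Qed.
End MS.

Lemma dil_close {X : CBanach} (f : X -> Cplx) e d r : 0 < d -> 
  (forall x y : X, inB x -> inB y -> vnorm (vsub x y) < d -> Cmod (Csub (f x) (f y)) < e) ->
  0 < r < 1 -> 1 - r < d -> forall z : X, inB z -> Cmod (Csub (f z) (f (vscal (r, 0) z))) <= e.
Proof. intros Hd U Hr Hrd z Hz. left. apply U; auto. apply inB_scal; auto; lra.
  rewrite <- (vscal_1 z) at 1. rewrite vsub_scal. replace (Csub C1 (r, 0)) with (1 - r, 0) by Ceq.
  rewrite vnorm_real_scal, Rabs_pos_eq by lra. unfold inB in Hz. pose proof (vnorm_nonneg z). nra. Qed.

Theorem proposition2p1 (X : CBanach) (S : X -> X)
  (HS : bounded_op S) (Hfr : finite_rank S)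
  (HP : op_norm_is (fun x => vsub x (S x)) 1)
  (phi : (X -> Cplx) -> Cplx) (Hphi : in_fiber0 phi)
  (f : X -> Cplx) (Hf : in_Au f) :
  phi f = phi (fun x => f (vsub x (S x))).
Proof.
  destruct Hphi as [Hch H0].
  destruct (coords X S HS Hfr) as [m [w [l [Hl Hrep]]]].
  assert (AuP : forall g : X -> Cplx, in_Au g -> in_Au (fun x => g (vsub x (S x)))).
  { intros g Hg. apply (in_Au_comp_lin X g (fun x => vsub x (S x))); auto.
    replace (fun x => vsub x (S x)) with (Qop X S 1) by (extensionality x; rewrite P_eq; auto). apply Q_bounded; auto.
    intros x Hx. unfold inB in *. pose proof (P_contr X S HS HP x). lra. }
  assert (Hall : forall eps, 0 < eps -> Cmod (Csub (phi f) (phi (fun x => f (vsub x (S x))))) <= eps).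
  { intros eps He. pose proof Hf as [[Mf Bf] [Hhol Hunif]].
    destruct (Hunif (eps / 4)) as [d [Hd U]]. lra.
    set (r := 1 - Rmin d 1 / 2).
    assert (Hr : 0 < r < 1) by (unfold r; pose proof (Rmin_r d 1); assert (0 < Rmin d 1) by (apply Rmin_glb_lt; lra); lra).
    assert (Hrd : 1 - r < d) by (unfold r; pose proof (Rmin_l d 1); lra).
    set (Fr := fun z => f (vscal (r, 0) z)).
    assert (AuF : in_Au Fr) by (unfold Fr; apply (in_Au_comp_lin X f (fun z => vscal (r, 0) z)); auto;
      [apply bounded_scal_op, bounded_id| intros; apply inB_scal; auto; lra]).
    assert (B1 : Cmod (Csub (phi f) (phi Fr)) <= eps / 4).
    { rewrite <- phi_sub; auto. apply phi_bound; auto. apply in_Au_sub; auto.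
      intros x Hx. apply (dil_close f (eps/4) d r); auto. }
    assert (B2 : Cmod (Csub (phi (fun x => f (vsub x (S x)))) (phi (fun x => Fr (vsub x (S x))))) <= eps / 4).
    { rewrite <- phi_sub; auto. apply phi_bound; auto. apply in_Au_sub; auto.
      intros x Hx. apply (dil_close f (eps/4) d r); auto. unfold inB in *. pose proof (P_contr X S HS HP x). lra. }
    assert (B3 := A3 X S HS HP phi Hch H0 f Hf m w l Hl Hrep r Hr (eps / 2) ltac:(lra)).
    replace (Csub (phi f) (phi (fun x => f (vsub x (S x))))) with
      (Cadd (Cadd (Csub (phi f) (phi Fr)) (Csub (phi Fr) (phi (fun x => Fr (vsub x (S x))))))
            (Copp (Csub (phi (fun x => f (vsub x (S x)))) (phi (fun x => Fr (vsub x (S x))))))) by Ceq.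
    eapply Rle_trans. apply Cmod_tri. rewrite Cmod_opp. eapply Rle_trans. apply Rplus_le_compat_r. apply Cmod_tri.
    unfold Fr in *. lra. }
  assert (E : Cmod (Csub (phi f) (phi (fun x => f (vsub x (S x))))) = 0).
  { apply Rle_antisym; [|apply Cmod_nonneg]. apply Rnot_lt_le. intro H.
    specialize (Hall (Cmod (Csub (phi f) (phi (fun x => f (vsub x (S x))))) / 2) ltac:(lra)). lra. }
  apply Cmod_eq0 in E. set (a := phi f) in *. set (b := phi (fun x => f (vsub x (S x)))) in *.
  replace a with (Cadd (Csub a b) b) by Ceq. rewrite E. apply Cadd_0_l. Qed.
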